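(* Let $r'(n)=e^{-n^3}$, $A'_n=\bigcup_{1\leq m\leq n,\ \gcd(m,n)=1}\left(\frac mn-r'(n),\frac mn+r'(n)\right)$ and $G=\bigcap_{k\geq1}\bigcup_{n\geq k}A'_n$. Then $G$ is a dense $G_\delta$ set contained in $\mathcal{S}$, $G$ has zero logarithmic measure, and hence $G$ is polar.
   Context: For $\alpha\in(0,1)\setminus\mathbb{Q}$ let $p_s/q_s$ be its continued fraction convergents, and $\mathcal{S}=\left\{\alpha\in(0,1)\setminus\mathbb{Q}:\ \limsup_{s\to\infty}\frac{\log q_{s+1}}{q_s^2\log q_s}=+\infty\right\}$. Logarithmic measure is the Hausdorff $h$-measure with $h(r)=1/\log(1/r)$, where $\mathcal{H}^h(E)=\lim_{\delta\to0}\inf\sum_n h(\operatorname{diam}A_n/2)$, the infimum over countable coverings of $E$ by bounded sets of diameter less than $\delta$. Polar means polar in $\mathbb{C}$ (contained in the $-\infty$ set of a subharmonic function not identically $-\infty$). *)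

(* Defs.v *)
From Stdlib Require Import Reals Lra Lia ZArith Arith Rtopology.
Open Scope R_scope.

Definition rprime (n : nat) : R := exp (- (INR n ^ 3)).

Definition Aprime (n : nat) (x : R) : Prop :=
  exists m : nat, (1 <= m <= n)%nat /\ Nat.gcd m n = 1%nat /\
    Rabs (x - INR m / INR n) < rprime n.

Definition Gset (x : R) : Prop :=
  forall k : nat, (1 <= k)%nat -> exists n : nat, (k <= n)%nat /\ Aprime n x.

Fixpoint gauss (x : R) (k : nat) : R :=
  match k with
  | O => x
  | S k => / gauss x k - IZR (Int_part (/ gauss x k))
  end.

(** partial quotient a_{k+1} = floor(1 / x_k) *)
Definition cf_a (x : R) (k : nat) : Z := Int_part (/ gauss x k).

(** (q_{s-1}, q_s), with q_{-1} = 0, q_0 = 1, q_{s+1} = a_{s+1} q_s + q_{s-1} *)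
Fixpoint cf_qpair (x : R) (s : nat) : R * R :=
  match s with
  | O => (0, 1)
  | S s => let (a, b) := cf_qpair x s in (b, IZR (cf_a x s) * b + a)
  end.

(** denominator q_s of the s-th convergent p_s/q_s of x = [0; a_1, a_2, ...] *)
Definition cf_q (x : R) (s : nat) : R := snd (cf_qpair x s).

Definition irrational (x : R) : Prop :=
  forall p q : Z, q <> 0%Z -> x <> IZR p / IZR q.

Definition Sset (x : R) : Prop :=
  0 < x < 1 /\ irrational x /\
  forall (M : R) (s0 : nat), exists s : nat, (s0 <= s)%nat /\
    ln (cf_q x (S s)) / (cf_q x s ^ 2 * ln (cf_q x s)) > M.

Definition dense_in_unit (E : R -> Prop) : Prop :=
  forall a b : R, 0 <= a -> a < b -> b <= 1 -> exists x, E x /\ a < x < b.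

Definition G_delta (E : R -> Prop) : Prop :=
  exists U : nat -> R -> Prop,
    (forall k, open_set (U k)) /\ (forall x, E x <-> forall k, U k x).

(** h(r) = 1 / log(1/r), with h(0) = 0 (its limit). *)
Definition hlog (r : R) : R := if Req_EM_T r 0 then 0 else / ln (/ r).

(** d is the diameter of A (diameter of the empty set taken as 0) *)
Definition is_diam (A : R -> Prop) (d : R) : Prop :=
  0 <= d /\
  (forall x y, A x -> A y -> Rabs (x - y) <= d) /\
  (forall d', 0 <= d' -> (forall x y, A x -> A y -> Rabs (x - y) <= d') -> d <= d').

Definition bounded_set (A : R -> Prop) : Prop :=
  exists B, forall x, A x -> Rabs x <= B.

(** H^h(E) = lim_{delta->0} H^h_delta(E) = 0.  Since H^h_delta(E) >= 0 is
    nonincreasing in delta, this says H^h_delta(E) = 0 for every delta > 0,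
    i.e. every delta>0 and eps>0 admit a countable cover by bounded sets of
    diameter < delta whose h(diam/2)-sum is <= eps. *)
Definition log_measure_zero (E : R -> Prop) : Prop :=
  forall delta eps : R, 0 < delta -> 0 < eps ->
    exists (A : nat -> R -> Prop) (d : nat -> R),
      (forall n, bounded_set (A n) /\ is_diam (A n) (d n) /\ d n < delta) /\
      (forall x, E x -> exists n, A n x) /\
      (forall N, sum_f_R0 (fun n => hlog (d n / 2)) N <= eps).

Definition C := (R * R)%type.

(** values in [-oo, +oo): None = -oo *)
Definition ext_lt (o : option R) (c : R) : Prop :=
  match o with None => True | Some v => v < c end.
Definition ext_le (o : option R) (c : R) : Prop :=
  match o with None => True | Some v => v <= c end.

Definition cdist (z w : C) : R :=
  sqrt ((fst z - fst w) ^ 2 + (snd z - snd w) ^ 2).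

Definition usc (u : C -> option R) : Prop :=
  forall (z : C) (c : R), ext_lt (u z) c ->
    exists eps, 0 < eps /\ forall w, cdist z w < eps -> ext_lt (u w) c.

(** local sub-mean value inequality  u(w) <= (1/2pi) int_0^{2pi} u(w + r e^{it}) dt
    for 0 <= r < rho.  The (Lebesgue) integral of the usc function t |-> u(w+re^{it})
    (bounded above on the circle) equals the infimum of the integrals of its
    continuous majorants, which is how the inequality is expressed here. *)
Definition submean (u : C -> option R) : Prop :=
  forall w : C, exists rho, 0 < rho /\
    forall r, 0 <= r < rho ->
      forall (g : R -> R) (pr : Riemann_integrable g 0 (2 * PI)),
        continuity g ->
        (forall t, 0 <= t <= 2 * PI ->
           ext_le (u (fst w + r * cos t, snd w + r * sin t)) (g t)) ->
        ext_le (u w) (RiemannInt pr / (2 * PI)).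

Definition subharmonic (u : C -> option R) : Prop := usc u /\ submean u.

Definition polar (E : R -> Prop) : Prop :=
  exists u : C -> option R,
    subharmonic u /\ (exists z, u z <> None) /\
    (forall x, E x -> u (x, 0) = None).

(* Main.v *)
Require Import Defs.
From Stdlib Require Import Reals Rtopology Lra Lia ZArith Psatz Classical ClassicalEpsilon.
Open Scope R_scope.

Lemma Aprime_open n : open_set (Aprime n).
Proof.
  intros x [m [Hm [Hg Hx]]].
  assert (Hd : 0 < rprime n - Rabs (x - INR m / INR n)) by lra.
  exists (mkposreal _ Hd). intros y Hy. simpl in Hy.
  exists m. split; [exact Hm|split; [exact Hg|]].
  unfold disc in Hy. simpl in Hy.
  replace (y - INR m / INR n) with ((y - x) + (x - INR m / INR n)) by ring.
  eapply Rle_lt_trans; [apply Rabs_triang|]. lra.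
Qed.

Lemma Gset_Gdelta : G_delta Gset.
Proof.
  exists (fun k x => exists n, (S k <= n)%nat /\ Aprime n x). split.
  - intros k x [n [Hn Hx]].
    destruct (Aprime_open n x Hx) as [d Hd].
    exists d. intros y Hy. exists n. split; auto.
  - intros x; split.
    + intros H k. apply H. lia.
    + intros H k Hk. destruct (H (pred k)) as [n [Hn Hx]]. exists n. split; [lia|auto].
Qed.

Lemma diam_interval c r : 0 < r -> is_diam (fun x => Rabs (x - c) < r) (2 * r).
Proof.
  intros Hr. split; [lra|split].
  - intros x y Hx Hy. replace (x - y) with ((x - c) - (y - c)) by ring.
    eapply Rle_trans; [apply Rabs_triang|]. rewrite Rabs_Ropp. lra.
  - intros d' Hd' H. destruct (Rle_or_lt (2*r) d') as [h|h]; [exact h|].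
    set (t := (r + d'/2)/2).
    assert (Ht : 0 <= t < r) by (unfold t; lra).
    specialize (H (c + t) (c - t)).
    replace (c + t - c) with t in H by ring. replace (c - t - c) with (-t) in H by ring.
    rewrite Rabs_Ropp, Rabs_right in H by lra.
    replace (c + t - (c - t)) with (2*t) in H by ring.
    rewrite Rabs_right in H by lra. specialize (H (proj2 Ht) (proj2 Ht)). unfold t in H. lra.
Qed.

Lemma diam_empty (A : R -> Prop) : (forall x, ~ A x) -> is_diam A 0.
Proof.
  intros H. split; [lra|split].
  - intros x y Hx. exfalso; eapply H; eauto.
  - intros; lra.
Qed.

Lemma is_diam_iff (A B : R -> Prop) d : (forall x, A x <-> B x) -> is_diam B d -> is_diam A d.
Proof.
  intros H [h1 [h2 h3]]. split; [exact h1|split].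
  - intros x y hx hy. apply h2; apply H; auto.
  - intros d' hd' h. apply h3; auto. intros x y hx hy. apply h; apply H; auto.
Qed.

Lemma bounded_interval (A : R -> Prop) c r : (forall x, A x -> Rabs (x - c) < r) -> bounded_set A.
Proof.
  intros H. exists (Rabs c + r). intros x hx. specialize (H x hx).
  replace x with ((x - c) + c) by ring.
  eapply Rle_trans; [apply Rabs_triang|]. lra.
Qed.

Definition sq (j : nat) := Nat.sqrt j.
Definition mm (j : nat) := (j - sq j * sq j)%nat.

Definition Acov (k j : nat) (x : R) : Prop :=
  (k <= sq j)%nat /\ (mm j < sq j)%nat /\
  Rabs (x - INR (S (mm j)) / INR (sq j)) < rprime (sq j).

Definition dcov (k j : nat) : R :=
  if andb (Nat.leb k (sq j)) (Nat.ltb (mm j) (sq j)) then 2 * rprime (sq j) else 0.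

Lemma rprime_pos n : 0 < rprime n.
Proof. unfold rprime. apply exp_pos. Qed.

Lemma hlog_rprime n : hlog (rprime n) = / (INR n ^ 3).
Proof.
  unfold hlog. destruct (Req_EM_T (rprime n) 0) as [h|h].
  - exfalso. pose proof (rprime_pos n). lra.
  - unfold rprime. rewrite <- exp_Ropp, Ropp_involutive, ln_exp. reflexivity.
Qed.

Lemma hlog0 : hlog 0 = 0.
Proof. unfold hlog. destruct (Req_EM_T 0 0); [reflexivity|lra]. Qed.

Definition bcov (k j : nat) : R :=
  if andb (Nat.leb k (sq j)) (Nat.ltb (mm j) (sq j)) then / (INR (sq j) ^ 3) else 0.

Lemma hlog_dcov k j : hlog (dcov k j / 2) = bcov k j.
Proof.
  unfold dcov, bcov. destruct (andb _ _).
  - replace (2 * rprime (sq j) / 2) with (rprime (sq j)) by field. apply hlog_rprime.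
  - replace (0/2) with 0 by field. apply hlog0.
Qed.

Definition Fcov (k j : nat) : R :=
  if Nat.ltb (sq j) k then 2 / INR k
  else 2 / INR (sq j) - INR (Nat.min (mm j) (sq j)) / INR (sq j) ^ 3.

Lemma sq_step j : (sq (S j) = sq j /\ mm (S j) = S (mm j) /\ (mm j < 2 * sq j)%nat)
  \/ (sq (S j) = S (sq j) /\ mm (S j) = 0%nat /\ mm j = (2 * sq j)%nat).
Proof.
  unfold mm, sq.
  pose proof (Nat.sqrt_spec j (Nat.le_0_l _)) as [h1 h2].
  pose proof (Nat.sqrt_spec (S j) (Nat.le_0_l _)) as [h3 h4].
  assert (Hle : (Nat.sqrt j <= Nat.sqrt (S j))%nat) by (apply Nat.sqrt_le_mono; lia).
  revert h1 h2 h3 h4 Hle. generalize (Nat.sqrt j) (Nat.sqrt (S j)). intros s s' h1 h2 h3 h4 Hle.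
  destruct (Nat.eq_dec s s') as [e|e].
  - left. subst s'. nia.
  - right. assert (s' = S s) by nia. subst s'. nia.
Qed.

Lemma Fcov_step k j : (1 <= k)%nat -> Fcov k j - Fcov k (S j) >= bcov k j.
Proof.
  intros Hk. unfold Fcov, bcov.
  destruct (sq_step j) as [[e1 [e2 e3]]|[e1 [e2 e3]]]; rewrite e1, e2.
  - destruct (Nat.ltb_spec (sq j) k); cbn [andb].
    + assert (Nat.leb k (sq j) = false) by (apply Nat.leb_gt; lia). rewrite H0; cbn [andb]. lra.
    + assert (Nat.leb k (sq j) = true) by (apply Nat.leb_le; lia). rewrite H0; cbn [andb].
      assert (hn : 0 < INR (sq j)) by (apply lt_0_INR; lia).
      destruct (Nat.ltb_spec (mm j) (sq j)).
      * rewrite Nat.min_l by lia. rewrite Nat.min_l by lia. rewrite S_INR.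
        unfold Rdiv. field_simplify; [|lra|lra]. lra.
      * rewrite Nat.min_r by lia. rewrite Nat.min_r by lia. lra.
  - assert (Nat.ltb (mm j) (sq j) = false) by (apply Nat.ltb_ge; lia). rewrite H, Bool.andb_false_r.
    destruct (Nat.ltb_spec (sq j) k); destruct (Nat.ltb_spec (S (sq j)) k).
    + lra.
    + assert (S (sq j) = k) by lia. subst k.
      rewrite Nat.min_0_l. change (INR 0) with 0. unfold Rdiv. rewrite Rmult_0_l. lra.
    + lia.
    + assert (hn : 0 < INR (sq j)) by (apply lt_0_INR; lia).
      rewrite Nat.min_0_l, Nat.min_r by lia. change (INR 0) with 0.
      rewrite S_INR.
      assert (2 / INR (sq j) - INR (sq j) / INR (sq j) ^ 3 - (2 / (INR (sq j) + 1) - 0 / (INR (sq j) + 1) ^ 3)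
              = (INR (sq j) - 1) / (INR (sq j) ^ 2 * (INR (sq j) + 1))) by (field; lra).
      rewrite H2. apply Rle_ge. assert (1 <= INR (sq j)) by (apply (le_INR 1); lia).
      apply Rmult_le_pos; [lra|]. left; apply Rinv_0_lt_compat; nra.
Qed.

Lemma Fcov_nonneg k j : (1 <= k)%nat -> 0 <= Fcov k j.
Proof.
  intros Hk. unfold Fcov. destruct (Nat.ltb_spec (sq j) k).
  - assert (0 < INR k) by (apply lt_0_INR; lia). unfold Rdiv. apply Rmult_le_pos; [lra|left; apply Rinv_0_lt_compat; lra].
  - assert (hn : 0 < INR (sq j)) by (apply lt_0_INR; lia).
    assert (INR (Nat.min (mm j) (sq j)) <= INR (sq j)) by (apply le_INR; lia).
    set (c := INR (Nat.min (mm j) (sq j))) in *. set (y := INR (sq j)) in *.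
    assert (1 <= y) by (unfold y; apply (le_INR 1); lia).
    replace (2 / y - c / y ^ 3) with ((2 * y ^ 2 - c) / y ^ 3) by (field; lra).
    apply Rmult_le_pos; [nra|]. left; apply Rinv_0_lt_compat; apply pow_lt; lra.
Qed.

Lemma Fcov_0 k : (1 <= k)%nat -> Fcov k 0 = 2 / INR k.
Proof.
  intros Hk. unfold Fcov. replace (sq 0) with 0%nat by reflexivity.
  destruct (Nat.ltb_spec 0 k); [reflexivity|lia].
Qed.

Lemma sum_bcov k N : (1 <= k)%nat -> sum_f_R0 (bcov k) N + Fcov k (S N) <= Fcov k 0.
Proof.
  intros Hk. induction N; simpl.
  - pose proof (Fcov_step k 0 Hk). lra.
  - pose proof (Fcov_step k (S N) Hk). lra.
Qed.

Lemma sq_pair n m : (m < n)%nat -> sq (n * n + m) = n /\ mm (n * n + m) = m.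
Proof.
  intros H. unfold mm, sq.
  assert (Nat.sqrt (n * n + m) = n).
  { apply Nat.sqrt_unique. split; nia. }
  rewrite H0. lia.
Qed.

Lemma exp_ge x : 0 <= x -> 1 + x <= exp x.
Proof.
  intros hx. destruct (Req_dec x 0) as [e|e].
  - subst. rewrite exp_0. lra.
  - left. apply exp_ineq1. lra.
Qed.

Lemma rprime_le n : (1 <= n)%nat -> rprime n <= / (INR n + 1).
Proof.
  intros Hn. unfold rprime. rewrite exp_Ropp.
  assert (1 <= INR n) by (apply (le_INR 1); lia).
  assert (INR n <= INR n ^ 3) by (simpl; nra).
  pose proof (exp_ge (INR n ^ 3) ltac:(nra)).
  apply Rinv_le_contravar; lra.
Qed.

Lemma log_measure_zero_G : log_measure_zero Gset.
Proof.
  intros delta eps Hd He.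
  assert (Hmin : 0 < Rmin delta eps) by (apply Rmin_glb_lt; lra).
  destruct (INR_unbounded (2 / Rmin delta eps)) as [k0 Hk0'].
  set (k := S k0).
  assert (Hk1 : (1 <= k)%nat) by (unfold k; lia).
  assert (Hkbig : 2 / Rmin delta eps < INR k) by (unfold k; rewrite S_INR; lra).
  assert (Hk0 : 0 < INR k) by (apply lt_0_INR; lia).
  assert (H2k : 2 / INR k < Rmin delta eps).
  { apply Rmult_lt_reg_r with (INR k / Rmin delta eps).
    - unfold Rdiv; apply Rmult_lt_0_compat; [lra|apply Rinv_0_lt_compat; lra].
    - replace (2 / INR k * (INR k / Rmin delta eps)) with (2 / Rmin delta eps) by (field; lra).
      replace (Rmin delta eps * (INR k / Rmin delta eps)) with (INR k) by (field; lra). lra. }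
  pose proof (Rmin_l delta eps). pose proof (Rmin_r delta eps).
  exists (Acov k), (dcov k). split; [|split].
  - intros j. unfold Acov, dcov.
    destruct (Nat.leb_spec k (sq j)); destruct (Nat.ltb_spec (mm j) (sq j)); simpl.
    + assert (hr := rprime_pos (sq j)). split; [|split].
      * apply (bounded_interval _ (INR (S (mm j)) / INR (sq j)) (rprime (sq j))).
        intros x [_ [_ Hx]]. exact Hx.
      * eapply is_diam_iff; [|apply (diam_interval (INR (S (mm j)) / INR (sq j))); exact hr].
        intros x; split; [intros [_ [_ h]]; exact h|intros h; repeat split; auto].
      * pose proof (rprime_le (sq j) ltac:(lia)).
        assert (INR k <= INR (sq j)) by (apply le_INR; lia).
        assert (/ (INR (sq j) + 1) < / INR k) by (apply Rinv_lt_contravar; nra).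
        unfold Rdiv in H2k. lra.
    + split; [|split].
      * exists 0. intros x [_ [h _]]. lia.
      * apply diam_empty. intros x [_ [h _]]. lia.
      * lra.
    + split; [|split].
      * exists 0. intros x [h _]. lia.
      * apply diam_empty. intros x [h _]. lia.
      * lra.
    + split; [|split].
      * exists 0. intros x [h _]. lia.
      * apply diam_empty. intros x [h _]. lia.
      * lra.
  - intros x Hx. destruct (Hx k Hk1) as [n [Hn [m [Hm [_ Hxm]]]]].
    exists (n * n + pred m)%nat. unfold Acov.
    destruct (sq_pair n (pred m) ltac:(lia)) as [e1 e2]. rewrite e1, e2.
    split; [lia|split; [lia|]]. replace (S (pred m)) with m by lia. exact Hxm.
  - intros N. eapply Rle_trans with (sum_f_R0 (bcov k) N).
    + right. apply sum_eq. intros i _. apply hlog_dcov.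
    + pose proof (sum_bcov k N Hk1). pose proof (Fcov_nonneg k (S N) Hk1).
      rewrite Fcov_0 in H1 by exact Hk1. lra.
Qed.

Lemma gcd_odd_pow2 i j : Nat.gcd (2 * i + 1) (2 ^ j) = 1%nat.
Proof.
  assert (H : forall j0 g, Nat.divide g (2 * i + 1) -> Nat.divide g (2 ^ j0) -> g = 1%nat).
  { induction j0 as [|j0 IH]; intros g h1 h2.
    - simpl in h2. apply Nat.divide_1_r. exact h2.
    - apply IH; [exact h1|].
      apply (Nat.gauss g 2 (2 ^ j0)); [simpl in h2; replace (2 ^ j0 + (2 ^ j0 + 0))%nat with (2 * 2 ^ j0)%nat in h2 by lia; exact h2|].
      set (d := Nat.gcd g 2).
      assert (hd2 : Nat.divide d 2) by apply Nat.gcd_divide_r.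
      assert (hdg : Nat.divide d g) by apply Nat.gcd_divide_l.
      assert (d <> 0%nat) by (intro e; rewrite e in hd2; destruct hd2 as [z hz]; lia).
      assert (d <= 2)%nat by (apply Nat.divide_pos_le; [lia|exact hd2]).
      assert (d <> 2%nat).
      { intro e. rewrite e in hdg. destruct (Nat.divide_trans _ _ _ hdg h1) as [z hz]. lia. }
      lia. }
  apply (H j); [apply Nat.gcd_divide_l|apply Nat.gcd_divide_r].
Qed.

Lemma pow2_big (x : R) : exists j : nat, x < 2 ^ j.
Proof.
  destruct (INR_unbounded x) as [n hn]. exists n.
  assert (INR n <= 2 ^ n).
  { clear hn. induction n as [|n IH]; [simpl; lra|]. rewrite S_INR.
    assert (1 <= 2 ^ n) by (apply pow_R1_Rle; lra). simpl. lra. }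
  lra.
Qed.

Lemma frac_in a b K : 0 <= a -> a < b -> b <= 1 ->
  exists n m, (K <= n)%nat /\ (1 <= m <= n)%nat /\ Nat.gcd m n = 1%nat /\
    a < INR m / INR n < b.
Proof.
  intros ha hab hb.
  destruct (pow2_big (Rmax (INR K) (4 / (b - a)))) as [j hj].
  pose proof (Rmax_l (INR K) (4 / (b - a))). pose proof (Rmax_r (INR K) (4 / (b - a))).
  set (N := (2 ^ j)%nat).
  assert (hN : INR N = 2 ^ j) by (unfold N; rewrite pow_INR; reflexivity).
  assert (hNpos : 0 < 2 ^ j) by (apply pow_lt; lra).
  assert (hba : 4 < (b - a) * 2 ^ j).
  { assert (4 / (b - a) < 2 ^ j) by lra.
    apply (Rmult_lt_compat_l (b - a)) in H1; [|lra].
    replace ((b - a) * (4 / (b - a))) with 4 in H1 by (field; lra). lra. }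
  set (y := a * 2 ^ j).
  assert (hy : 0 <= y) by (unfold y; nra).
  destruct (archimed y) as [hu1 hu2].
  set (z := (up y - 1)%Z).
  assert (hz : IZR z <= y < IZR z + 1) by (unfold z; rewrite minus_IZR; lra).
  assert (hz0 : (0 <= z)%Z) by (assert (IZR (-1) < IZR z) by lra; apply lt_IZR in H1; lia).
  set (m0 := Z.to_nat z).
  assert (hm0 : INR m0 = IZR z) by (unfold m0; rewrite INR_IZR_INZ, Z2Nat.id; auto).
  destruct (Nat.Even_or_Odd m0) as [[i hi]|[i hi]].
  -
    exists N, (2 * i + 1)%nat.
    assert (hm : INR (2 * i + 1) = INR m0 + 1) by (rewrite hi, plus_INR; change (INR 1) with 1; ring).
    assert (ineq : a < INR (2*i+1) / INR N < b).
    { rewrite hm, hN, hm0. split.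
      - apply Rmult_lt_reg_r with (2 ^ j); [lra|]. unfold Rdiv. rewrite Rmult_assoc, Rinv_l by lra. unfold y in hz. lra.
      - apply Rmult_lt_reg_r with (2 ^ j); [lra|]. unfold Rdiv. rewrite Rmult_assoc, Rinv_l by lra. unfold y in hz. lra. }
    split; [apply INR_le; lra|split; [|split; [apply gcd_odd_pow2|exact ineq]]].
    split; [lia|]. apply INR_le.
    destruct ineq as [_ h]. assert (INR (2 * i + 1) / INR N < 1) by lra.
    rewrite hN in H1. apply Rmult_lt_compat_r with (r := 2 ^ j) in H1; [|lra].
    unfold Rdiv in H1. rewrite Rmult_assoc, Rinv_l, Rmult_1_r, Rmult_1_l in H1 by lra. lra.
  - exists N, (2 * i + 1 + 2)%nat.
    replace (2 * i + 1 + 2)%nat with (2 * (i + 1) + 1)%nat by lia.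
    assert (hm : INR (2 * (i+1) + 1) = INR m0 + 2) by (rewrite hi; replace (2*(i+1)+1)%nat with (2*i+1+2)%nat by lia; rewrite (plus_INR _ 2); change (INR 2) with 2; ring).
    assert (ineq : a < INR (2*(i+1)+1) / INR N < b).
    { rewrite hm, hN, hm0. split.
      - apply Rmult_lt_reg_r with (2 ^ j); [lra|]. unfold Rdiv. rewrite Rmult_assoc, Rinv_l by lra. unfold y in hz. lra.
      - apply Rmult_lt_reg_r with (2 ^ j); [lra|]. unfold Rdiv. rewrite Rmult_assoc, Rinv_l by lra. unfold y in hz. lra. }
    split; [apply INR_le; lra|split; [|split; [apply gcd_odd_pow2|exact ineq]]].
    split; [lia|]. apply INR_le.
    destruct ineq as [_ h]. assert (INR (2 * (i+1) + 1) / INR N < 1) by lra.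
    rewrite hN in H1. apply Rmult_lt_compat_r with (r := 2 ^ j) in H1; [|lra].
    unfold Rdiv in H1. rewrite Rmult_assoc, Rinv_l, Rmult_1_r, Rmult_1_l in H1 by lra. lra.
Qed.

Lemma step_ex a b K : 0 <= a -> a < b -> b <= 1 ->
  exists ab' : R * R, exists n, (K <= n)%nat /\ a < fst ab' /\ fst ab' < snd ab' /\ snd ab' < b /\
    (forall x, fst ab' <= x <= snd ab' -> Aprime n x).
Proof.
  intros ha hab hb.
  destruct (frac_in a b K ha hab hb) as [n [m [hK [hm [hg hc]]]]].
  set (c := INR m / INR n) in *.
  assert (hr : 0 < rprime n) by (unfold rprime; apply exp_pos).
  set (d := Rmin (Rmin (rprime n) (c - a)) (b - c) / 2).
  assert (hd1 : 0 < d).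
  { unfold d. apply Rmult_lt_0_compat; [|lra]. apply Rmin_glb_lt; [apply Rmin_glb_lt|]; lra. }
  assert (hd2 : d < rprime n /\ d < c - a /\ d < b - c).
  { unfold d. pose proof (Rmin_l (Rmin (rprime n) (c - a)) (b - c)).
    pose proof (Rmin_r (Rmin (rprime n) (c - a)) (b - c)).
    pose proof (Rmin_l (rprime n) (c - a)). pose proof (Rmin_r (rprime n) (c - a)). lra. }
  exists (c - d, c + d), n. simpl. split; [exact hK|].
  split; [lra|split; [lra|split; [lra|]]].
  intros x hx. exists m. split; [exact hm|split; [exact hg|]].
  fold c. apply Rabs_def1; lra.
Qed.

Definition Pstep (ab : R * R) (K : nat) (ab' : R * R) : Prop :=
  exists n, (K <= n)%nat /\ fst ab < fst ab' /\ fst ab' < snd ab' /\ snd ab' < snd ab /\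
    (forall x, fst ab' <= x <= snd ab' -> Aprime n x).

Definition next (ab : R * R) (K : nat) : R * R :=
  match excluded_middle_informative (exists ab', Pstep ab K ab') with
  | left h => proj1_sig (constructive_indefinite_description _ h)
  | right _ => ab
  end.

Lemma next_spec ab K : 0 <= fst ab -> fst ab < snd ab -> snd ab <= 1 -> Pstep ab K (next ab K).
Proof.
  intros h1 h2 h3. unfold next.
  destruct (excluded_middle_informative _) as [h|h].
  - exact (proj2_sig (constructive_indefinite_description _ h)).
  - exfalso. apply h. destruct (step_ex (fst ab) (snd ab) K h1 h2 h3) as [ab' hab].
    exists ab'. exact hab.
Qed.

Fixpoint seqI (ab : R * R) (k : nat) : R * R :=
  match k with O => ab | S k => next (seqI ab k) (S k) end.

Lemma dense_G : dense_in_unit Gset.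
Proof.
  intros a b ha hab hb.
  set (I := seqI (a, b)).
  assert (inv : forall k, 0 <= fst (I k) /\ fst (I k) < snd (I k) /\ snd (I k) <= 1 /\
     Pstep (I k) (S k) (I (S k))).
  { intros k. induction k as [|k IH].
    - simpl. assert (Pstep (a,b) 1 (I 1%nat)) by (apply next_spec; simpl; lra).
      repeat split; simpl; try lra. exact H.
    - destruct IH as [h1 [h2 [h3 h4]]]. destruct h4 as [n [hn [q1 [q2 [q3 q4]]]]].
      assert (0 <= fst (I (S k)) /\ fst (I (S k)) < snd (I (S k)) /\ snd (I (S k)) <= 1) by lra.
      destruct H as [e1 [e2 e3]].
      repeat split; try lra. apply next_spec; lra. }
  set (u := fun k => fst (I k)). set (v := fun k => snd (I k)).
  assert (ug : Un_growing u).
  { intros k. destruct (inv k) as [_ [_ [_ [n [_ [h _]]]]]]. unfold u. lra. }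
  assert (vd : forall k, v (S k) <= v k).
  { intros k. destruct (inv k) as [_ [_ [_ [n [_ [_ [_ [h _]]]]]]]]. unfold v. lra. }
  assert (vdec : forall j k, (j <= k)%nat -> v k <= v j).
  { intros j k hjk. induction hjk; [lra|]. pose proof (vd m). lra. }
  assert (uv : forall j k, u j <= v k).
  { intros j k. destruct (Nat.le_ge_cases j k) as [h|h].
    - pose proof (tech9 u ug j k h). destruct (inv k) as [_ [hk _]]. unfold u, v in *. lra.
    - pose proof (vdec k j h). destruct (inv j) as [_ [hk _]]. unfold u, v in *. lra. }
  assert (ub : has_ub u).
  { exists (v 0%nat). intros y [k hk]. rewrite hk. apply uv. }
  destruct (growing_cv u ug ub) as [x hx].
  assert (inI : forall k, u k <= x <= v k).
  { intros k. split; [apply growing_ineq; auto|].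
    apply (@Rle_cv_lim u (fun _ => v k) x (v k)); [intros; apply uv|exact hx|].
    intros e he. exists 0%nat. intros. unfold Rdist. rewrite Rminus_eq_0, Rabs_R0. lra. }
  exists x. split.
  - intros k hk. destruct (inv (pred k)) as [_ [_ [_ [n [hn [_ [_ [_ h]]]]]]]].
    exists n. split; [lia|]. apply h. replace (S (pred k)) with k by lia.
    apply inI.
  - destruct (inv 0%nat) as [_ [_ [_ [n [hn [q1 [q2 [q3 _]]]]]]]].
    pose proof (inI 1%nat). unfold u, v in H. simpl in q1, q3. split; lra.
Qed.

Lemma irr_inv_frac y : 0 < y < 1 -> irrational y ->
  0 < / y - IZR (Int_part (/ y)) < 1 /\ irrational (/ y - IZR (Int_part (/ y))) /\
  (1 <= Int_part (/ y))%Z.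
Proof.
  intros hy hirr.
  pose proof (base_Int_part (/ y)) as [b1 b2].
  set (z := Int_part (/ y)) in *.
  assert (hinv : 1 < / y).
  { rewrite <- Rinv_1. apply Rinv_lt_contravar; lra. }
  assert (hneq : / y <> IZR z).
  { intro e. apply (hirr 1%Z z).
    - intro ez. rewrite ez in e. simpl in e. assert (0 < / y) by (apply Rinv_0_lt_compat; lra). lra.
    - rewrite <- e. field. lra. }
  split; [lra|split].
  - intros p q hq e.
    (* /y = z + p/q  => y = q / (z q + p) *)
    apply (hirr q (z * q + p)%Z).
    + intro e2. assert (h0 : IZR (z*q+p) = 0) by (rewrite e2; reflexivity).
      rewrite plus_IZR, mult_IZR in h0.
      assert (IZR q <> 0) by (apply not_0_IZR; auto).
      assert (/ y = (IZR z * IZR q + IZR p) / IZR q) by (replace (/ y) with (IZR z + IZR p / IZR q) by lra; field; auto).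
      rewrite h0 in H0. unfold Rdiv in H0. rewrite Rmult_0_l in H0.
      assert (0 < / y) by (apply Rinv_0_lt_compat; lra). lra.
    + assert (IZR q <> 0) by (apply not_0_IZR; auto).
      assert (hyy : / y = IZR z + IZR p / IZR q) by lra.
      rewrite plus_IZR, mult_IZR.
      assert (hden : IZR z * IZR q + IZR p <> 0).
      { intro h0. assert (IZR z + IZR p / IZR q = 0).
        { replace (IZR z + IZR p / IZR q) with ((IZR z * IZR q + IZR p) / IZR q) by (field; auto).
          rewrite h0. unfold Rdiv; ring. }
        assert (0 < / y) by (apply Rinv_0_lt_compat; lra). lra. }
      replace y with (/ / y) by (field; lra). rewrite hyy.
      field. split; auto.
  - assert (IZR 0 < IZR z) by (simpl; lra). apply lt_IZR in H. lia.
Qed.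

Fixpoint cf_ppair (x : R) (s : nat) : R * R :=
  match s with
  | O => (1, 0)
  | S s => let (a, b) := cf_ppair x s in (b, IZR (cf_a x s) * b + a)
  end.

Definition Qn x s := snd (cf_qpair x s).
Definition Qm x s := fst (cf_qpair x s).
Definition Pn x s := snd (cf_ppair x s).
Definition Pm x s := fst (cf_ppair x s).
Definition an x s := IZR (cf_a x s).

Lemma Q_S x s : Qm x (S s) = Qn x s /\ Qn x (S s) = an x s * Qn x s + Qm x s.
Proof. unfold Qm, Qn, an. simpl. destruct (cf_qpair x s). simpl. auto. Qed.
Lemma P_S x s : Pm x (S s) = Pn x s /\ Pn x (S s) = an x s * Pn x s + Pm x s.
Proof. unfold Pm, Pn, an. simpl. destruct (cf_ppair x s). simpl. auto. Qed.

Lemma gauss_S x k : gauss x (S k) = / gauss x k - an x k.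
Proof. reflexivity. Qed.

Section CF.
Variable x : R.
Hypothesis hx : 0 < x < 1.
Hypothesis hirr : irrational x.

Lemma gauss_prop k : 0 < gauss x k < 1 /\ irrational (gauss x k).
Proof.
  induction k as [|k [h1 h2]]; [simpl; auto|].
  destruct (irr_inv_frac _ h1 h2) as [g1 [g2 _]]. simpl. auto.
Qed.

Lemma an_ge1 k : 1 <= an x k.
Proof.
  destruct (gauss_prop k) as [h1 h2]. destruct (irr_inv_frac _ h1 h2) as [_ [_ g]].
  unfold an, cf_a. apply IZR_le in g. exact g.
Qed.

Lemma an_bounds k : an x k <= / gauss x k < an x k + 1.
Proof.
  unfold an, cf_a. pose proof (base_Int_part (/ gauss x k)). lra.
Qed.

Lemma Q_bounds s : 0 <= Qm x s /\ 1 <= Qn x s /\ Qm x s <= Qn x s.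
Proof.
  induction s as [|s IH].
  - unfold Qm, Qn; simpl; lra.
  - destruct (Q_S x s) as [e1 e2]. rewrite e1, e2. pose proof (an_ge1 s). nra.
Qed.

Lemma Q_mono s : Qn x s <= Qn x (S s).
Proof. destruct (Q_S x s) as [_ e]. rewrite e. pose proof (an_ge1 s). pose proof (Q_bounds s). nra. Qed.

Lemma Q_mono_le s t : (s <= t)%nat -> Qn x s <= Qn x t.
Proof. intros h. induction h; [lra|]. pose proof (Q_mono m). lra. Qed.

Lemma Q_ge s : INR s <= Qn x s.
Proof.
  assert (forall s', INR s' <= Qn x s' /\ INR (S s') <= Qn x (S s')).
  { clear s. intro s'. induction s' as [|s IH].
    - simpl. pose proof (Q_bounds 0). pose proof (Q_bounds 1). lra.
    - destruct IH as [h1 h2]. split; [exact h2|].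
      destruct (Q_S x (S s)) as [e1 e2]. rewrite e2. destruct (Q_S x s) as [e3 _].
      assert (Qm x (S s) >= 1) by (rewrite e3; pose proof (Q_bounds s); lra).
      pose proof (an_ge1 (S s)). pose proof (Q_bounds (S s)). rewrite S_INR. nra. }
  apply H.
Qed.

Lemma det s : Pm x s * Qn x s - Pn x s * Qm x s = (-1) ^ s.
Proof.
  induction s as [|s IH].
  - unfold Pm, Qn, Pn, Qm; simpl; ring.
  - destruct (Q_S x s) as [e1 e2]. destruct (P_S x s) as [e3 e4].
    rewrite e1, e2, e3, e4. simpl. rewrite <- IH. ring.
Qed.

Lemma ident s : x = (Pn x s + Pm x s * gauss x s) / (Qn x s + Qm x s * gauss x s).
Proof.
  induction s as [|s IH].
  - unfold Pn, Pm, Qn, Qm; simpl. field.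
  - destruct (Q_S x s) as [e1 e2]. destruct (P_S x s) as [e3 e4].
    rewrite e1, e2, e3, e4. rewrite gauss_S.
    destruct (gauss_prop s) as [[t1 t2] _].
    pose proof (Q_bounds s) as [q1 [q2 q3]].
    rewrite IH at 1.
    set (t := gauss x s) in *.
    assert (hat : 0 < / t - an x s).
    { destruct (gauss_prop (S s)) as [[u1 _] _]. rewrite gauss_S in u1. exact u1. }
    assert (hD : 0 < Qn x s + Qm x s * t) by nra.
    assert (hE : (Qn x s + Qm x s * t) = t * (an x s * Qn x s + Qm x s + Qn x s * (/ t - an x s))) by (field; lra).
    assert (hF : 0 < an x s * Qn x s + Qm x s + Qn x s * (/ t - an x s)) by nra.
    field. repeat split; lra.
Qed.

Lemma int_PQ s : (exists z, Qn x s = IZR z) /\ (exists z, Qm x s = IZR z) /\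
  (exists z, Pn x s = IZR z) /\ (exists z, Pm x s = IZR z).
Proof.
  induction s as [|s [[a ha] [[b hb] [[c hc] [d hd]]]]].
  - unfold Qn, Qm, Pn, Pm; simpl. repeat split; [exists 1%Z|exists 0%Z|exists 0%Z|exists 1%Z]; reflexivity.
  - destruct (Q_S x s) as [e1 e2]. destruct (P_S x s) as [e3 e4].
    rewrite e1, e2, e3, e4. unfold an.
    repeat split; [exists (cf_a x s * a + b)%Z|exists a|exists (cf_a x s * c + d)%Z|exists c];
      try (rewrite plus_IZR, mult_IZR; congruence); auto.
Qed.

Lemma err_eq s : Rabs (Qn x s * x - Pn x s) = gauss x s / (Qn x s + Qm x s * gauss x s).
Proof.
  pose proof (ident s) as e.
  destruct (gauss_prop s) as [[t1 t2] _].
  pose proof (Q_bounds s) as [q1 [q2 q3]].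
  set (t := gauss x s) in *.
  assert (hd : 0 < Qn x s + Qm x s * t) by nra.
  assert (Qn x s * ((Pn x s + Pm x s * t) / (Qn x s + Qm x s * t)) - Pn x s = t * (Pm x s * Qn x s - Pn x s * Qm x s) / (Qn x s + Qm x s * t)).
  { field. lra. }
  rewrite <- e in H.
  rewrite H, det. unfold Rdiv. rewrite !Rabs_mult, <- RPow_abs. replace (Rabs (-1)) with 1 by (unfold Rabs; destruct Rcase_abs; lra). rewrite pow1.
  rewrite Rabs_right by lra. rewrite Rabs_right; [ring|].
  left. apply Rinv_0_lt_compat. exact hd.
Qed.

Lemma err_bounds s : / (Qn x (S s) + Qn x s) < Rabs (Qn x s * x - Pn x s) <= / Qn x (S s).
Proof.
  rewrite err_eq.
  destruct (gauss_prop s) as [[t1 t2] _].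
  pose proof (Q_bounds s) as [q1 [q2 q3]].
  pose proof (an_bounds s) as [b1 b2].
  destruct (Q_S x s) as [_ e2]. rewrite e2.
  set (t := gauss x s) in *.
  assert (E : t / (Qn x s + Qm x s * t) = / (Qn x s * / t + Qm x s)) by (field; nra).
  rewrite E.
  assert (an x s * Qn x s <= Qn x s * / t) by nra.
  assert (Qn x s * / t < (an x s + 1) * Qn x s) by nra.
  assert (0 < an x s * Qn x s + Qm x s) by (pose proof (an_ge1 s); nra).
  split; apply Rinv_lt_contravar || apply Rinv_le_contravar; nra.
Qed.

End CF.

Lemma ln_le_sub1 z : 0 < z -> ln z <= z - 1.
Proof. intros hz. pose proof (exp_ineq1_le (ln z)). rewrite exp_ln in H by lra. lra. Qed.

Lemma ln_le_2sqrt y : 1 <= y -> ln y <= 2 * sqrt y.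
Proof.
  intros hy. assert (hs : 0 < sqrt y) by (apply sqrt_lt_R0; lra).
  replace y with (sqrt y * sqrt y) at 1 by (apply sqrt_sqrt; lra).
  rewrite ln_mult by lra. pose proof (ln_le_sub1 _ hs). lra.
Qed.

Lemma exp_big y : 1 <= y -> y ^ 2 * (y + 1) < exp (y ^ 3).
Proof.
  intros hy.
  assert (e : exp (y ^ 3) = exp (y ^ 3 / 2) * exp (y ^ 3 / 2)) by (rewrite <- exp_plus; f_equal; field).
  pose proof (exp_ineq1_le (y ^ 3 / 2)).
  assert (1 <= y ^ 3) by (simpl; nra).
  assert ((1 + y ^ 3 / 2) * (1 + y ^ 3 / 2) <= exp (y ^ 3)) by (rewrite e; apply Rmult_le_compat; lra).
  assert (y ^ 2 * (y + 1) < (1 + y ^ 3 / 2) * (1 + y ^ 3 / 2)).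
  { assert (hw : 1 <= y * y) by nra.
    assert (y * y < 1 + (y*y)*(y*y)*(y*y)/4) by (assert (0 <= (y*y - 6/5)^2) by (apply pow2_ge_0); nra).
    simpl. nra. }
  lra.
Qed.

Lemma IZR_abs_ge1 k : k <> 0%Z -> 1 <= Rabs (IZR k).
Proof.
  intros hk. rewrite <- abs_IZR. apply IZR_le. lia.
Qed.

Lemma G_unit x : Gset x -> 0 < x < 1.
Proof.
  intros hG. destruct (hG 2%nat ltac:(lia)) as [n [hn [m [hm [hg hx]]]]].
  assert (hmn : (m < n)%nat).
  { destruct (Nat.eq_dec m n) as [e|e]; [|lia]. subst. rewrite Nat.gcd_diag in hg. lia. }
  assert (hN : 2 <= INR n) by (apply (le_INR 2); lia).
  pose proof (rprime_le n ltac:(lia)).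
  assert (hr : rprime n < / INR n) by (apply Rle_lt_trans with (/ (INR n + 1)); [lra|apply Rinv_lt_contravar; nra]).
  assert (1 <= INR m) by (apply (le_INR 1); lia).
  assert (INR m + 1 <= INR n) by (rewrite <- S_INR; apply le_INR; lia).
  assert (h1 : / INR n <= INR m / INR n) by (unfold Rdiv; rewrite <- (Rmult_1_l (/ INR n)) at 1; apply Rmult_le_compat_r; [left; apply Rinv_0_lt_compat; lra|lra]).
  assert (h2 : INR m / INR n <= 1 - / INR n) by (apply (Rmult_le_reg_r (INR n)); [lra|]; field_simplify; lra).
  apply Rabs_def2 in hx. lra.
Qed.

Lemma rprime_small n : (1 <= n)%nat -> INR n ^ 2 * (INR n + 1) * rprime n < 1.
Proof.
  intros hn. assert (1 <= INR n) by (apply (le_INR 1); lia).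
  pose proof (exp_big (INR n) H). unfold rprime. rewrite exp_Ropp.
  assert (0 < exp (INR n ^ 3)) by apply exp_pos.
  apply (Rmult_lt_reg_r (exp (INR n ^ 3))); [lra|]. rewrite Rmult_assoc, Rinv_l by lra. lra.
Qed.

Lemma nat_coprime_div n m a b : (1 <= n)%nat -> Nat.gcd m n = 1%nat -> (m * a = b * n)%nat -> (0 < a)%nat -> (n <= a)%nat.
Proof.
  intros hn hg e ha.
  assert (Nat.divide n (m * a)) by (exists b; lia).
  apply Nat.gauss in H; [|rewrite Nat.gcd_comm; exact hg].
  apply Nat.divide_pos_le; auto.
Qed.

Lemma G_irr x : Gset x -> irrational x.
Proof.
  intros hG p q hq e.
  set (aq := Z.abs_nat q).
  destruct (hG (S aq + 1)%nat ltac:(lia)) as [n [hn [m [hm [hg hx]]]]].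
  assert (hN : 1 <= INR n) by (apply (le_INR 1); lia).
  assert (hqn : Rabs (IZR q) + 1 <= INR n).
  { rewrite <- abs_IZR. replace (Z.abs q) with (Z.of_nat aq) by (unfold aq; lia).
    rewrite <- INR_IZR_INZ. rewrite <- S_INR. apply le_INR. lia. }
  assert (hq0 : IZR q <> 0) by (apply not_0_IZR; auto).
  assert (hmq : (Z.of_nat m * q = p * Z.of_nat n)%Z).
  { destruct (Z.eq_dec (Z.of_nat m * q - p * Z.of_nat n) 0) as [h|h]; [lia|].
    exfalso. pose proof (IZR_abs_ge1 _ h) as hge.
    assert (IZR (Z.of_nat m * q - p * Z.of_nat n) = IZR q * INR n * (INR m / INR n - x)).
    { rewrite e. rewrite minus_IZR, !mult_IZR, <- !INR_IZR_INZ. field. split; lra. }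
    rewrite H in hge. rewrite !Rabs_mult in hge.
    rewrite (Rabs_right (INR n)) in hge by lra.
    assert (Rabs (INR m / INR n - x) < rprime n) by (rewrite Rabs_minus_sym; exact hx).
    pose proof (rprime_small n ltac:(lia)).
    assert (0 <= Rabs (IZR q)) by apply Rabs_pos.
    assert (0 < rprime n) by apply rprime_pos.
    assert (Rabs (IZR q) * INR n * Rabs (INR m / INR n - x) <= INR n * INR n * rprime n).
    { apply Rmult_le_compat; [nra|apply Rabs_pos|nra|lra]. }
    assert (INR n * INR n * rprime n <= INR n ^ 2 * (INR n + 1) * rprime n) by (simpl; nra).
    lra. }
  assert (hnat : (m * aq = Z.abs_nat p * n)%nat).
  { apply Nat2Z.inj. rewrite !Nat2Z.inj_mul. unfold aq. rewrite !Nat2Z.inj_abs_nat.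
    rewrite <- (Z.abs_eq (Z.of_nat m)) by lia. rewrite <- (Z.abs_eq (Z.of_nat n)) by lia.
    rewrite <- !Z.abs_mul. rewrite hmq. reflexivity. }
  assert (0 < aq)%nat by (unfold aq; lia).
  pose proof (nat_coprime_div n m aq (Z.abs_nat p) ltac:(lia) hg hnat H). lia.
Qed.

Lemma find_s x (hx : 0 < x < 1) (hirr : irrational x) y : 1 <= y -> exists s, Qn x s <= y < Qn x (S s).
Proof.
  intros hy. destruct (INR_unbounded y) as [N hN].
  pose proof (Q_ge x hx hirr N).
  assert (forall N, y < Qn x N -> exists s, Qn x s <= y < Qn x (S s)).
  { clear - hy. intros N. induction N as [|N IH]; intros h.
    - unfold Qn in h; simpl in h. lra.
    - destruct (Rlt_or_le y (Qn x N)) as [h'|h']; [apply IH; exact h'|]. exists N. lra. }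
  apply (H0 N). lra.
Qed.

Lemma G_in_S x : Gset x -> Sset x.
Proof.
  intros hG. pose proof (G_unit x hG) as hx. pose proof (G_irr x hG) as hirr.
  split; [exact hx|split; [exact hirr|]].
  intros M s0.
  set (M' := Rabs M). assert (hM' : 0 <= M') by apply Rabs_pos. assert (M <= M') by apply RRle_abs.
  set (B := Qn x s0 + (2 * M' + 2) ^ 2 + 2).
  destruct (INR_unbounded B) as [N0 hN0].
  destruct (hG (N0 + 2)%nat ltac:(lia)) as [n [hn [m [hm [hg hxm]]]]].
  set (y := INR n) in *.
  assert (hyB : B < y) by (unfold y; apply Rlt_le_trans with (INR N0); [lra|apply le_INR; lia]).
  pose proof (Q_bounds x hx hirr s0) as [_ [hq0 _]].
  assert (hy2 : 2 <= y) by (unfold B in hyB; nra).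
  destruct (find_s x hx hirr y ltac:(lra)) as [s [hs1 hs2]].
  destruct (int_PQ x s) as [[qz hqz] [_ [[pz hpz] _]]].
  destruct (int_PQ x (S s)) as [[qz' hqz'] _].
  assert (hyZ : y = IZR (Z.of_nat n)) by (unfold y; apply INR_IZR_INZ).
  assert (hQ' : y + 1 <= Qn x (S s)).
  { rewrite hqz' in *. rewrite hyZ in *. rewrite <- plus_IZR. apply IZR_le. apply lt_IZR in hs2. lia. }
  pose proof (Q_bounds x hx hirr s) as [_ [hQ1 _]].
  pose proof (err_bounds x hx hirr s) as [eb1 eb2].
  assert (hr : 0 < rprime n) by apply rprime_pos.
  assert (hrs : y ^ 2 * (y + 1) * rprime n < 1) by (apply rprime_small; lia).
  assert (hnx : Rabs (y * x - INR m) = y * Rabs (x - INR m / y)).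
  { replace (y * x - INR m) with (y * (x - INR m / y)) by (field; lra).
    rewrite Rabs_mult, Rabs_right by lra. reflexivity. }
  assert (hA : (Z.of_nat m * qz = pz * Z.of_nat n)%Z).
  { destruct (Z.eq_dec (Z.of_nat m * qz - pz * Z.of_nat n) 0) as [h|h]; [lia|].
    exfalso. pose proof (IZR_abs_ge1 _ h) as hge.
    rewrite minus_IZR, !mult_IZR, <- !INR_IZR_INZ, <- hqz, <- hpz in hge. fold y in hge.
    replace (INR m * Qn x s - Pn x s * y) with (y * (Qn x s * x - Pn x s) - Qn x s * (y * x - INR m)) in hge by ring.
    assert (Rabs (y * (Qn x s * x - Pn x s) - Qn x s * (y * x - INR m)) <= y * Rabs (Qn x s * x - Pn x s) + Qn x s * Rabs (y * x - INR m)).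
    { unfold Rminus. eapply Rle_trans; [apply Rabs_triang|]. rewrite Rabs_Ropp, !Rabs_mult.
      rewrite (Rabs_right y), (Rabs_right (Qn x s)) by lra. lra. }
    assert (y * Rabs (Qn x s * x - Pn x s) <= y / (y + 1)).
    { unfold Rdiv. apply Rmult_le_compat_l; [lra|]. eapply Rle_trans; [exact eb2|].
      apply Rinv_le_contravar; lra. }
    assert (Qn x s * Rabs (y * x - INR m) <= y * (y * rprime n)).
    { rewrite hnx. apply Rmult_le_compat; try lra; [apply Rmult_le_pos; [lra|apply Rabs_pos]|].
      apply Rmult_le_compat_l; lra. }
    assert (y / (y + 1) + y * (y * rprime n) < 1).
    { apply (Rmult_lt_reg_r (y + 1)); [lra|]. field_simplify; [|lra]. simpl in hrs. nra. }
    lra. }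
  assert (hqpos : (1 <= qz)%Z) by (apply le_IZR; lra).
  assert (hpzpos : (0 <= pz)%Z) by nia.
  assert (hnat : (m * Z.to_nat qz = Z.to_nat pz * n)%nat).
  { apply Nat2Z.inj. rewrite !Nat2Z.inj_mul, !Z2Nat.id by lia. exact hA. }
  pose proof (nat_coprime_div n m (Z.to_nat qz) (Z.to_nat pz) ltac:(lia) hg hnat ltac:(lia)) as hle.
  assert (hqn : qz = Z.of_nat n).
  { assert (qz <= Z.of_nat n)%Z by (apply le_IZR; rewrite <- hqz, <- hyZ; exact hs1). lia. }
  assert (hQy : Qn x s = y) by (rewrite hqz, hqn; symmetry; exact hyZ).
  assert (hpm : pz = Z.of_nat m) by (rewrite hqn in hA; nia).
  assert (hPm : Pn x s = INR m) by (rewrite hpz, hpm; symmetry; apply INR_IZR_INZ).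
  rewrite hQy, hPm in eb1.
  rewrite hnx in eb1.
  set (Q' := Qn x (S s)) in *.
  assert (hlow : exp (y ^ 3) < y * (Q' + y)).
  { assert (/ (Q' + y) < y * rprime n) by (eapply Rlt_le_trans; [exact eb1|]; apply Rmult_le_compat_l; lra).
    unfold rprime in H0. rewrite exp_Ropp in H0. fold y in H0.
    assert (0 < exp (y ^ 3)) by apply exp_pos.
    apply (Rmult_lt_compat_r (exp (y ^ 3) * (Q' + y))) in H0; [|nra].
    field_simplify in H0; lra. }
  pose proof (exp_big y ltac:(lra)) as hexp.
  assert (hQ'big : exp (y ^ 3) / (2 * y) <= Q').
  { apply (Rmult_le_reg_r (2 * y)); [lra|]. field_simplify; [|lra]. simpl in hexp. nra. }
  assert (hlnQ' : y ^ 3 - 2 * y < ln Q').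
  { assert (0 < exp (y ^ 3) / (2 * y)) by (apply Rdiv_lt_0_compat; [apply exp_pos|lra]).
    assert (ln (exp (y ^ 3) / (2 * y)) <= ln Q').
    { destruct (Req_dec (exp (y ^ 3) / (2 * y)) Q') as [e|e]; [rewrite e; lra|].
      left. apply ln_increasing; lra. }
    unfold Rdiv in H1. rewrite ln_mult, ln_exp, ln_Rinv in H1 by (try apply Rinv_0_lt_compat; try apply exp_pos; lra).
    pose proof (ln_le_sub1 (2 * y) ltac:(lra)). lra. }
  exists s. split.
  - destruct (Nat.le_gt_cases s0 s) as [h|h]; [exact h|].
    exfalso. pose proof (Q_mono_le x hx hirr s s0 ltac:(lia)). unfold B in hyB.
    assert (0 <= (2 * M' + 2) ^ 2) by apply pow2_ge_0. lra.
  - unfold cf_q. fold (Qn x (S s)). fold (Qn x s). fold Q'. rewrite hQy.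
    assert (hlny : 0 < ln y) by (rewrite <- ln_1; apply ln_increasing; lra).
    assert (hsq : 2 * M' + 2 <= sqrt y).
    { rewrite <- (sqrt_pow2 (2 * M' + 2)) by lra. apply sqrt_le_1_alt. unfold B in hyB. lra. }
    assert (hs1' : 1 <= sqrt y) by lra.
    pose proof (ln_le_2sqrt y ltac:(lra)).
    assert (M' * (y ^ 2 * ln y) <= M' * (y ^ 2 * (2 * sqrt y))).
    { apply Rmult_le_compat_l; [lra|]. apply Rmult_le_compat_l; [simpl; nra|lra]. }
    assert (hsy : sqrt y * sqrt y = y) by (apply sqrt_sqrt; lra).
    assert (M' * (y ^ 2 * (2 * sqrt y)) <= y ^ 3 - 2 * y).
    { assert (2 * M' <= sqrt y - 2) by lra.
      replace (M' * (y ^ 2 * (2 * sqrt y))) with ((2 * M') * (y ^ 2 * sqrt y)) by ring.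
      apply Rle_trans with ((sqrt y - 2) * (y ^ 2 * sqrt y)).
      { apply Rmult_le_compat_r; [simpl; nra|lra]. }
      replace ((sqrt y - 2) * (y ^ 2 * sqrt y)) with (y ^ 2 * (sqrt y * sqrt y) - 2 * y ^ 2 * sqrt y) by ring.
      rewrite hsy. simpl. nra. }
    apply Rlt_gt. apply Rle_lt_trans with M'; [lra|].
    assert (hpos : 0 < y ^ 2 * ln y) by (apply Rmult_lt_0_compat; [apply pow_lt; lra|lra]).
    apply (Rmult_lt_reg_r (y ^ 2 * ln y)); [exact hpos|].
    unfold Rdiv. rewrite Rmult_assoc, Rinv_l, Rmult_1_r by lra. lra.
Qed.

Definition IntEq (f : R -> R) (a b v : R) : Prop :=
  exists pr : Riemann_integrable f a b, RiemannInt pr = v.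

Lemma int_unique f a b v w : IntEq f a b v -> IntEq f a b w -> v = w.
Proof. intros [p1 e1] [p2 e2]. subst. apply RiemannInt_P5. Qed.

Lemma int_ex f a b : a <= b -> (forall x, a <= x <= b -> continuity_pt f x) -> exists v, IntEq f a b v.
Proof.
  intros h c. exists (RiemannInt (continuity_implies_RiemannInt h c)). eexists; reflexivity.
Qed.

Lemma int_lin f g a b l v w : IntEq f a b v -> IntEq g a b w -> IntEq (fun x => f x + l * g x) a b (v + l * w).
Proof.
  intros [p1 e1] [p2 e2]. exists (RiemannInt_P10 l p1 p2). rewrite (RiemannInt_P13 p1 p2). subst; reflexivity.
Qed.

Lemma int_mono f g a b v w : a <= b -> IntEq f a b v -> IntEq g a b w -> (forall x, a < x < b -> f x <= g x) -> v <= w.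
Proof. intros h [p1 e1] [p2 e2] H. subst. apply RiemannInt_P19; auto. Qed.

Lemma int_const c a b : IntEq (fun _ => c) a b (c * (b - a)).
Proof. exists (RiemannInt_P14 a b c). apply RiemannInt_P15. Qed.

Lemma int_chasles f a b c v w : IntEq f a b v -> IntEq f b c w -> IntEq f a c (v + w).
Proof. intros [p1 e1] [p2 e2]. exists (RiemannInt_P24 p1 p2). rewrite <- (RiemannInt_P26 p1 p2). subst; reflexivity. Qed.

Lemma int_ext f g a b v : a <= b -> (forall x, a <= x <= b -> f x = g x) -> IntEq f a b v -> IntEq g a b v.
Proof.
  intros h H [p e].
  assert (pg : Riemann_integrable g a b).
  { assert (HH : forall x, Rmin a b <= x <= Rmax a b -> f x = g x).
    { intros x hx. apply H. rewrite Rmin_left, Rmax_right in hx by lra. exact hx. }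
    exact (@Riemann_integrable_ext f g a b HH p). }
  exists pg. rewrite <- e. symmetry. apply RiemannInt_P18; auto. intros; apply H; lra.
Qed.

Lemma int_FTC f F a b : a <= b -> (forall x, a <= x <= b -> continuity_pt f x) ->
  (forall x, a <= x <= b -> derivable_pt_lim F x (f x)) -> IntEq f a b (F b - F a).
Proof.
  intros h C0 D.
  exists (continuity_implies_RiemannInt h C0).
  rewrite (RiemannInt_P20 h (FTC_P1 h C0)).
  pose proof (@RiemannInt_P29 f a b h C0) as A1.
  assert (A2 : antiderivative f F a b).
  { split; [|exact h]. intros x hx. exists (exist _ (f x) (D x hx)). reflexivity. }
  destruct (antiderivative_Ucte f _ _ a b A1 A2) as [c hc].
  rewrite (hc b), (hc a) by lra. ring.
Qed.

Lemma affine_deriv al be x : derivable_pt_lim (fun t => al * t + be) x al.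
Proof.
  intros eps he. exists (mkposreal 1 Rlt_0_1). intros h hh _.
  replace ((al * (x + h) + be - (al * x + be)) / h - al) with 0 by (field; auto).
  rewrite Rabs_R0. exact he.
Qed.

Lemma affine_cont al be x : continuity_pt (fun t => al * t + be) x.
Proof. apply (derivable_continuous_pt _ _ (exist _ al (affine_deriv al be x))). Qed.

Lemma int_sub f a b al be v : a <= b -> 0 < al -> (forall x, continuity_pt f x) ->
  IntEq f (al * a + be) (al * b + be) v -> IntEq (fun t => f (al * t + be)) a b (v / al).
Proof.
  intros h hal C hv.
  assert (h' : al * a + be <= al * b + be) by nra.
  destruct (@RiemannInt_P30 f _ _ h' (fun x _ => C x)) as [g [hg _]].
  assert (Dg : forall x, al * a + be <= x <= al * b + be -> derivable_pt_lim g x (f x)).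
  { intros x hx. destruct (hg x hx) as [pr e]. rewrite e. destruct pr as [l hl]. simpl. exact hl. }
  assert (E1 : IntEq f (al * a + be) (al * b + be) (g (al * b + be) - g (al * a + be))).
  { apply int_FTC; auto. }
  rewrite (int_unique _ _ _ _ _ hv E1).
  assert (E : (g (al * b + be) - g (al * a + be)) / al = g (al * b + be) / al - g (al * a + be) / al) by (field; lra).
  rewrite E.
  apply (int_FTC _ (fun t => g (al * t + be) / al)); auto.
  - intros x hx. apply (continuity_pt_comp (fun t => al * t + be) f); [|apply C].
    apply affine_cont.
  - intros x hx.
    assert (hd : derivable_pt_lim (fun t => al * t + be) x al).
    { apply affine_deriv. }
    assert (hc := derivable_pt_lim_comp (fun t => al * t + be) g x al (f (al * x + be)) hd (Dg (al * x + be) ltac:(split; nra))).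
    replace (f (al * x + be)) with ((f (al * x + be) * al) * / al) by (field; lra).
    apply (derivable_pt_lim_scal (comp g (fun t => al * t + be)) (/ al)) in hc.
    unfold mult_real_fct, comp in hc. 
    intros eps he. destruct (hc eps he) as [d hd2]. exists d. intros hh hh0 hhd.
    specialize (hd2 hh hh0 hhd). replace ((g (al * (x + hh) + be) / al - g (al * x + be) / al) / hh) with ((/ al * g (al * (x + hh) + be) - / al * g (al * x + be)) / hh) by (field; lra).
    replace (f (al * x + be) * al * / al) with (/ al * (f (al * x + be) * al)) by ring. exact hd2.
Qed.

Lemma cont_plus f g x : continuity_pt f x -> continuity_pt g x -> continuity_pt (fun t => f t + g t) x.
Proof. intros; exact (continuity_pt_plus f g x H H0). Qed.
Lemma cont_minus f g x : continuity_pt f x -> continuity_pt g x -> continuity_pt (fun t => f t - g t) x.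
Proof. intros; exact (continuity_pt_minus f g x H H0). Qed.
Lemma cont_mult f g x : continuity_pt f x -> continuity_pt g x -> continuity_pt (fun t => f t * g t) x.
Proof. intros; exact (continuity_pt_mult f g x H H0). Qed.
Lemma cont_const c x : continuity_pt (fun _ => c) x.
Proof. apply continuity_pt_const. intros a b; reflexivity. Qed.
Lemma cont_id x : continuity_pt (fun t => t) x.
Proof. apply derivable_continuous_pt. apply derivable_pt_id. Qed.
Lemma cont_comp f g x : continuity_pt f x -> continuity_pt g (f x) -> continuity_pt (fun t => g (f t)) x.
Proof. intros; exact (continuity_pt_comp f g x H H0). Qed.
Lemma cont_cos x : continuity_pt cos x.
Proof. apply continuity_cos. Qed.
Lemma cont_sin x : continuity_pt sin x.
Proof. apply continuity_sin. Qed.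
Lemma cont_ln x : 0 < x -> continuity_pt ln x.
Proof. intros h. apply (derivable_continuous_pt _ _ (exist _ (/ x) (derivable_pt_lim_ln x h))). Qed.
Lemma cont_sqrt x : 0 <= x -> continuity_pt sqrt x.
Proof. apply continuity_pt_sqrt. Qed.
Lemma cont_abs f x : continuity_pt f x -> continuity_pt (fun t => Rabs (f t)) x.
Proof. intros h. apply (cont_comp f Rabs); auto. apply Rcontinuity_abs. Qed.
Lemma cont_max f g x : continuity_pt f x -> continuity_pt g x -> continuity_pt (fun t => Rmax (f t) (g t)) x.
Proof.
  intros h1 h2.
  assert (E : forall t, Rmax (f t) (g t) = (f t + g t + Rabs (f t - g t)) / 2).
  { intros t. unfold Rmax. destruct (Rle_dec (f t) (g t)).
    - rewrite Rabs_left1 by lra. field.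
    - rewrite Rabs_right by lra. field. }
  assert (continuity_pt (fun t => (f t + g t + Rabs (f t - g t)) * / 2) x).
  { apply cont_mult; [|apply cont_const]. apply cont_plus; [apply cont_plus; auto|].
    apply cont_abs. apply cont_minus; auto. }
  intros eps he. destruct (H eps he) as [d [hd hh]]. exists d. split; auto.
  intros y hy. specialize (hh y hy). simpl in *. unfold R_dist in *. rewrite !E. unfold Rdiv. exact hh.
Qed.

Definition periodic (f : R -> R) := forall t, f (t + 2 * PI) = f t.

Lemma PI_pos : 0 < PI.
Proof. apply PI_RGT_0. Qed.

Lemma int_shift1 f a b v c : a <= b -> (forall x, continuity_pt f x) ->
  IntEq f (a + c) (b + c) v -> IntEq (fun t => f (t + c)) a b v.
Proof.
  intros h C hv.
  assert (hv' : IntEq f (1 * a + c) (1 * b + c) v) by (rewrite !Rmult_1_l; exact hv).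
  pose proof (int_sub f a b 1 c v h Rlt_0_1 C hv') as H.
  replace (v / 1) with v in H by field.
  apply (int_ext (fun t => f (1 * t + c))); auto. intros; rewrite Rmult_1_l; reflexivity.
Qed.

Lemma int_per_shift f a b v : a <= b -> (forall x, continuity_pt f x) -> periodic f ->
  IntEq f a b v -> IntEq f (a + 2 * PI) (b + 2 * PI) v.
Proof.
  intros h C P hv.
  destruct (int_ex f (a + 2 * PI) (b + 2 * PI) ltac:(lra) (fun x _ => C x)) as [w hw].
  pose proof (int_shift1 f a b w (2 * PI) h C hw) as H.
  assert (IntEq f a b w) by (apply (int_ext (fun t => f (t + 2 * PI))); auto).
  rewrite (int_unique _ _ _ _ _ hv H0). exact hw.
Qed.

Lemma int_half_shift f v : (forall x, continuity_pt f x) -> periodic f ->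
  IntEq f 0 (2 * PI) v -> IntEq (fun t => f (t + PI)) 0 (2 * PI) v.
Proof.
  intros C P hv. pose proof PI_pos.
  destruct (int_ex f 0 PI ltac:(lra) (fun x _ => C x)) as [A hA].
  destruct (int_ex f PI (2 * PI) ltac:(lra) (fun x _ => C x)) as [B hB].
  pose proof (int_chasles _ _ _ _ _ _ hA hB) as hAB.
  rewrite (int_unique _ _ _ _ _ hv hAB).
  assert (h1 : IntEq (fun t => f (t + PI)) 0 PI B).
  { apply int_shift1; auto; [lra|]. replace (0 + PI) with PI by ring. replace (PI + PI) with (2 * PI) by ring. exact hB. }
  assert (h2 : IntEq (fun t => f (t + PI)) PI (2 * PI) A).
  { apply int_shift1; auto; [lra|]. pose proof (int_per_shift f 0 PI A ltac:(lra) C P hA).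
    replace (PI + PI) with (0 + 2 * PI) by ring. replace (2 * PI + PI) with (PI + 2 * PI) by ring. exact H0. }
  replace (A + B) with (B + A) by ring. eapply int_chasles; eauto.
Qed.

Lemma int_double f v : (forall x, continuity_pt f x) -> periodic f ->
  IntEq f 0 (2 * PI) v -> IntEq (fun t => f (2 * t)) 0 (2 * PI) v.
Proof.
  intros C P hv. pose proof PI_pos.
  pose proof (int_per_shift f 0 (2 * PI) v ltac:(lra) C P hv) as h2.
  replace (0 + 2 * PI) with (2 * PI) in h2 by ring.
  pose proof (int_chasles _ _ _ _ _ _ hv h2) as h4.
  assert (h4' : IntEq f (2 * 0 + 0) (2 * (2 * PI) + 0) (v + v)).
  { replace (2 * 0 + 0) with 0 by ring. replace (2 * (2 * PI) + 0) with (2 * PI + 2 * PI) by ring.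
    exact h4. }
  pose proof (int_sub f 0 (2 * PI) 2 0 (v + v) ltac:(lra) ltac:(lra) C h4') as H2.
  replace ((v + v) / 2) with v in H2 by field.
  apply (int_ext (fun t => f (2 * t + 0))); auto; [lra|]. intros; rewrite Rplus_0_r; reflexivity.
Qed.

Definition Qf (a b t : R) : R := 1 + 2 * (a * cos t - b * sin t) + (a * a + b * b).
Definition Lq (a b t : R) : R := ln (Qf a b t).

Lemma sc1 t : sin t * sin t + cos t * cos t = 1.
Proof. pose proof (sin2_cos2 t). unfold Rsqr in H. exact H. Qed.

Lemma A_bound a b t : (a * cos t - b * sin t) * (a * cos t - b * sin t) <= a * a + b * b.
Proof.
  pose proof (sc1 t).
  assert ((a * cos t - b * sin t) * (a * cos t - b * sin t) + (a * sin t + b * cos t) * (a * sin t + b * cos t)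
    = (a * a + b * b) * (sin t * sin t + cos t * cos t)) by ring.
  rewrite H in H0.
  assert (0 <= (a * sin t + b * cos t) * (a * sin t + b * cos t)) by apply Rle_0_sqr. lra.
Qed.

Lemma Qf_lower a b t s0 : a * a + b * b <= s0 -> s0 < 1 -> (1 - sqrt s0) * (1 - sqrt s0) <= Qf a b t.
Proof.
  intros hs hs0. unfold Qf. set (A := a * cos t - b * sin t).
  pose proof (A_bound a b t). fold A in H.
  assert (h0 : 0 <= a * a + b * b) by nra.
  assert (hA : Rabs A <= sqrt s0).
  { rewrite <- sqrt_Rsqr_abs. apply sqrt_le_1_alt. unfold Rsqr. lra. }
  assert (hs1 : sqrt s0 < 1) by (rewrite <- sqrt_1; apply sqrt_lt_1_alt; lra).
  assert (0 <= sqrt s0) by apply sqrt_pos.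
  set (q := sqrt s0) in *.
  assert (h1 : (1 - Rabs A) * (1 - Rabs A) <= 1 + 2 * A + (a * a + b * b)).
  { assert (Rabs A * Rabs A = A * A) by (rewrite <- Rabs_mult; apply Rabs_right; nra).
    assert (- Rabs A <= A) by (pose proof (Rabs_Ropp A); pose proof (RRle_abs (- A)); lra). nra. }
  assert (h2 : (1 - q) * (1 - q) <= (1 - Rabs A) * (1 - Rabs A)).
  { pose proof (Rabs_pos A). apply Rmult_le_compat; lra. }
  lra.
Qed.

Lemma Qf_upper a b t : a * a + b * b < 1 -> Qf a b t <= 4.
Proof.
  intros hs. unfold Qf. pose proof (A_bound a b t). nra.
Qed.

Lemma Qf_pos a b t : a * a + b * b < 1 -> 0 < Qf a b t.
Proof.
  intros hs. pose proof (Qf_lower a b t (a * a + b * b) (Rle_refl _) hs).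
  assert (sqrt (a * a + b * b) < 1) by (rewrite <- sqrt_1; apply sqrt_lt_1_alt; nra).
  assert (0 <= sqrt (a * a + b * b)) by apply sqrt_pos. nra.
Qed.

Lemma Qf_cont a b t : continuity_pt (Qf a b) t.
Proof.
  unfold Qf. apply cont_plus; [apply cont_plus; [apply cont_const|]|apply cont_const].
  apply cont_mult; [apply cont_const|]. apply cont_minus; apply cont_mult; try apply cont_const; [apply cont_cos|apply cont_sin].
Qed.

Lemma Lq_cont a b t : a * a + b * b < 1 -> continuity_pt (Lq a b) t.
Proof.
  intros hs. unfold Lq. apply (cont_comp (Qf a b) ln); [apply Qf_cont|apply cont_ln; apply Qf_pos; auto].
Qed.

Lemma Qf_per a b : periodic (Qf a b).
Proof.
  intros t. unfold Qf. rewrite cos_plus, sin_plus, cos_2PI, sin_2PI. f_equal. f_equal. ring.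
Qed.

Lemma Qf_neg a b t : Qf (- a) (- b) t = Qf a b (t + PI).
Proof. unfold Qf. rewrite neg_cos, neg_sin. ring. Qed.

Lemma Qf_prod a b t : Qf a b t * Qf (- a) (- b) t = Qf (b * b - a * a) (- (2 * a * b)) (2 * t).
Proof.
  unfold Qf. rewrite cos_2a, sin_2a. pose proof (sc1 t).
  assert (forall X Y : R, X - Y = 0 -> X = Y) by (intros; lra). apply H0.
  transitivity (2 * (a * a + b * b) * (1 - (sin t * sin t + cos t * cos t))); [ring|]. rewrite H. ring.
Qed.

Lemma MV_step a b v v' : a * a + b * b < 1 ->
  IntEq (Lq a b) 0 (2 * PI) v -> IntEq (Lq (b * b - a * a) (- (2 * a * b))) 0 (2 * PI) v' -> v = v' / 2.
Proof.
  intros hs hv hv'. pose proof PI_pos.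
  assert (hs' : (b * b - a * a) * (b * b - a * a) + (- (2 * a * b)) * (- (2 * a * b)) < 1).
  { replace ((b * b - a * a) * (b * b - a * a) + (- (2 * a * b)) * (- (2 * a * b))) with ((a * a + b * b) * (a * a + b * b)) by ring.
    assert (0 <= a * a + b * b) by nra. nra. }
  assert (hper : periodic (Lq a b)) by (intros t; unfold Lq; rewrite Qf_per; reflexivity).
  pose proof (int_half_shift (Lq a b) v (fun t => Lq_cont a b t hs) hper hv) as hneg.
  assert (hneg' : IntEq (Lq (- a) (- b)) 0 (2 * PI) v).
  { apply (int_ext (fun t => Lq a b (t + PI))); [lra| |exact hneg]. intros; unfold Lq; rewrite Qf_neg; reflexivity. }
  pose proof (int_lin _ _ _ _ 1 _ _ hv hneg') as hsum.
  assert (hsum' : IntEq (fun t => Lq (b * b - a * a) (- (2 * a * b)) (2 * t)) 0 (2 * PI) (v + 1 * v)).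
  { apply (int_ext (fun t => Lq a b t + 1 * Lq (- a) (- b) t)); [lra| |exact hsum].
    intros t _. unfold Lq. rewrite Rmult_1_l, <- ln_mult, Qf_prod; [reflexivity| |].
    - apply Qf_pos; auto.
    - apply Qf_pos. nra. }
  assert (hper' : periodic (Lq (b * b - a * a) (- (2 * a * b)))) by (intros t; unfold Lq; rewrite Qf_per; reflexivity).
  pose proof (int_double _ v' (fun t => Lq_cont _ _ t hs') hper' hv') as hd.
  pose proof (int_unique _ _ _ _ _ hsum' hd). lra.
Qed.

Lemma pow2_big' (x : R) : exists j : nat, x < 2 ^ j.
Proof.
  destruct (INR_unbounded x) as [n hn]. exists n.
  assert (INR n <= 2 ^ n).
  { clear hn. induction n as [|n IH]; [simpl; lra|]. rewrite S_INR.
    assert (1 <= 2 ^ n) by (apply pow_R1_Rle; lra). simpl. lra. }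
  lra.
Qed.

Lemma MV a b v : a * a + b * b < 1 -> IntEq (Lq a b) 0 (2 * PI) v -> v = 0.
Proof.
  intros hs hv. pose proof PI_pos.
  set (s0 := a * a + b * b) in *.
  set (m0 := (1 - sqrt s0) * (1 - sqrt s0)).
  assert (hq : sqrt s0 < 1) by (rewrite <- sqrt_1; apply sqrt_lt_1_alt; unfold s0 in *; nra).
  assert (hq0 : 0 <= sqrt s0) by apply sqrt_pos.
  assert (hm0 : 0 < m0) by (unfold m0; nra).
  assert (hm1 : m0 <= 1) by (unfold m0; nra).
  set (K := ln 4 - ln m0).
  assert (hl4 : 0 < ln 4) by (rewrite <- ln_1; apply ln_increasing; lra).
  assert (hlm : ln m0 <= 0).
  { destruct (Req_dec m0 1) as [e|e]; [rewrite e, ln_1; lra|]. rewrite <- ln_1. left; apply ln_increasing; lra. }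
  assert (claim : forall k a' b' v', a' * a' + b' * b' <= s0 -> IntEq (Lq a' b') 0 (2 * PI) v' ->
     Rabs v' <= 2 * PI * K / 2 ^ k).
  { intros k. induction k as [|k IH]; intros a' b' v' hs' hv'.
    - simpl. replace (2 * PI * K / 1) with (K * (2 * PI - 0)) by field.
      assert (hb : forall t, - K <= Lq a' b' t <= K).
      { intros t. unfold Lq.
        pose proof (Qf_lower a' b' t s0 hs' ltac:(unfold s0 in *; lra)). fold m0 in H0.
        pose proof (Qf_upper a' b' t ltac:(unfold s0 in *; lra)).
        assert (ln m0 <= ln (Qf a' b' t)).
        { destruct (Req_dec m0 (Qf a' b' t)) as [e|e]; [rewrite e; lra|left; apply ln_increasing; lra]. }
        assert (ln (Qf a' b' t) <= ln 4).
        { destruct (Req_dec 4 (Qf a' b' t)) as [e|e]; [rewrite e; lra|left; apply ln_increasing; [|lra]]. lra. }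
        unfold K; split; lra. }
      pose proof (int_const K 0 (2 * PI)). pose proof (int_const (- K) 0 (2 * PI)).
      assert (v' <= K * (2 * PI - 0)) by (eapply int_mono; [|exact hv'|exact H0|]; [lra|intros; apply hb]).
      assert (- K * (2 * PI - 0) <= v') by (eapply int_mono; [|exact H1|exact hv'|]; [lra|intros; apply hb]).
      apply Rabs_le. lra.
    - set (a'' := b' * b' - a' * a'). set (b'' := - (2 * a' * b')).
      assert (hs'' : a'' * a'' + b'' * b'' <= s0).
      { unfold a'', b''. replace ((b' * b' - a' * a') * (b' * b' - a' * a') + - (2 * a' * b') * - (2 * a' * b')) with ((a' * a' + b' * b') * (a' * a' + b' * b')) by ring.
        assert (0 <= a' * a' + b' * b') by nra. unfold s0 in *. nra. }
      destruct (int_ex (Lq a'' b'') 0 (2 * PI) ltac:(lra) (fun t _ => Lq_cont a'' b'' t ltac:(unfold s0 in *; lra))) as [v'' hv''].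
      pose proof (MV_step a' b' v' v'' ltac:(unfold s0 in *; lra) hv' hv'').
      pose proof (IH a'' b'' v'' hs'' hv'').
      rewrite H0. unfold Rdiv. rewrite Rabs_mult. rewrite (Rabs_right (/ 2)) by (apply Rle_ge; left; apply Rinv_0_lt_compat; lra). simpl.
      replace (2 * PI * K * / (2 * 2 ^ k)) with ((2 * PI * K * / 2 ^ k) * / 2) by (field; apply pow_nonzero; lra).
      apply Rmult_le_compat_r; [left; apply Rinv_0_lt_compat; lra|exact H1]. }
  destruct (Req_dec v 0) as [e|e]; [exact e|exfalso].
  assert (hK : 0 <= K) by (unfold K; lra).
  assert (hav : 0 < Rabs v) by (apply Rabs_pos_lt; exact e).
  destruct (pow2_big' (2 * PI * K / Rabs v)) as [k hk].
  pose proof (claim k a b v (Rle_refl _) hv).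
  assert (0 < 2 ^ k) by (apply pow_lt; lra).
  apply (Rmult_lt_compat_r (Rabs v)) in hk; [|lra].
  unfold Rdiv in hk. rewrite Rmult_assoc, Rinv_l, Rmult_1_r in hk by lra.
  apply (Rmult_le_compat_r (2 ^ k)) in H0; [|lra].
  unfold Rdiv in H0. rewrite Rmult_assoc, Rinv_l, Rmult_1_r in H0 by lra. lra.
Qed.

Definition circ (w : R * R) (r t : R) : R * R := (fst w + r * cos t, snd w + r * sin t).
Definition blk (a L : R) (z : R * R) : R := ln (Rmax (cdist z (a, 0)) (exp L)).

Lemma ln_sqrt' x : 0 < x -> ln (sqrt x) = ln x / 2.
Proof.
  intros hx. assert (0 < sqrt x) by (apply sqrt_lt_R0; auto).
  replace x with (sqrt x * sqrt x) at 2 by (apply sqrt_sqrt; lra).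
  rewrite ln_mult by auto. field.
Qed.

Lemma mean_ln_general (D : R -> R) k al be : 0 < k -> al * al + be * be < 1 ->
  (forall t, D t * D t = k * k * Qf al be t) -> (forall t, 0 <= D t) ->
  IntEq (fun t => ln (D t)) 0 (2 * PI) (2 * PI * ln k).
Proof.
  intros hk hs hD hD0. pose proof PI_pos.
  destruct (int_ex (Lq al be) 0 (2 * PI) ltac:(lra) (fun t _ => Lq_cont al be t hs)) as [v hv].
  pose proof (MV al be v hs hv). subst v.
  pose proof (int_lin _ _ _ _ (/ 2) _ _ (int_const (ln k) 0 (2 * PI)) hv) as H1.
  replace (ln k * (2 * PI - 0) + / 2 * 0) with (2 * PI * ln k) in H1 by ring.
  apply (int_ext (fun x => ln k + / 2 * Lq al be x)); [lra| |exact H1].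
  intros t _. pose proof (Qf_pos al be t hs).
  assert (hDt : 0 < D t).
  { destruct (hD0 t) as [h|h]; [exact h|]. pose proof (hD t). rewrite <- h in H2.
    assert (0 < k * k * Qf al be t) by (apply Rmult_lt_0_compat; [nra|lra]). lra. }
  assert (ln (D t * D t) = ln (k * k * Qf al be t)) by (rewrite hD; reflexivity).
  assert (0 < k * k) by nra.
  rewrite ln_mult in H2 by lra. rewrite ln_mult in H2 by lra. rewrite ln_mult in H2 by lra. unfold Lq. lra.
Qed.

Lemma sq_eq (x : R) : x ^ 2 = x * x.
Proof. ring. Qed.

Lemma cdist_circ_sq w a r t :
  cdist (circ w r t) (a, 0) * cdist (circ w r t) (a, 0) =
  (fst w - a + r * cos t) * (fst w - a + r * cos t) + (snd w + r * sin t) * (snd w + r * sin t).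
Proof.
  unfold cdist, circ. rewrite sqrt_sqrt by (apply Rplus_le_le_0_compat; apply pow2_ge_0). simpl. ring.
Qed.

Lemma cdist_w w a : cdist w (a, 0) = sqrt ((fst w - a) * (fst w - a) + snd w * snd w).
Proof. unfold cdist; simpl. f_equal. ring. Qed.

Lemma mean_ln_circ w a r : let c1 := fst w - a in let c2 := snd w in
  0 <= r -> r <> sqrt (c1 * c1 + c2 * c2) ->
  IntEq (fun t => ln (cdist (circ w r t) (a, 0))) 0 (2 * PI)
        (2 * PI * ln (Rmax r (sqrt (c1 * c1 + c2 * c2)))).
Proof.
  intros c1 c2 hr hne.
  set (S := c1 * c1 + c2 * c2). set (rho := sqrt S).
  assert (hS : 0 <= S) by (unfold S; nra).
  assert (hrho : rho * rho = S) by (apply sqrt_sqrt; lra).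
  assert (hrho0 : 0 <= rho) by apply sqrt_pos.
  destruct (Rlt_or_le r rho) as [h|h].
  - rewrite Rmax_right by lra.
    assert (hrp : 0 < rho) by lra.
    apply (mean_ln_general _ rho (r * c1 / S) (- (r * c2 / S))); auto.
    + replace (r * c1 / S * (r * c1 / S) + - (r * c2 / S) * - (r * c2 / S)) with (r * r / S) by (unfold S in *; field; nra).
      apply (Rmult_lt_reg_r S); [nra|]. unfold Rdiv. rewrite Rmult_assoc, Rinv_l by nra. nra.
    + intros t. rewrite cdist_circ_sq. unfold Qf. rewrite hrho. fold c1 c2. pose proof (sc1 t).
      assert (hS0 : S <> 0) by (intro e; rewrite e in hrho; nra).
      assert (E1 : S * (1 + 2 * (r * c1 / S * cos t - - (r * c2 / S) * sin t) + (r * c1 / S * (r * c1 / S) + - (r * c2 / S) * - (r * c2 / S)))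
        = S + 2 * r * (c1 * cos t + c2 * sin t) + r * r * (c1 * c1 + c2 * c2) / S) by (field; exact hS0).
      rewrite E1. fold S. replace (r * r * S / S) with (r * r) by (field; exact hS0).
      transitivity (c1 * c1 + c2 * c2 + 2 * r * (c1 * cos t + c2 * sin t) + r * r * (sin t * sin t + cos t * cos t)); [ring|].
      rewrite H. fold S. ring.
    + intros t; apply sqrt_pos.
  - assert (hr' : rho < r) by (destruct h; [auto|exfalso; apply hne; symmetry; auto]).
    rewrite Rmax_left by lra.
    apply (mean_ln_general _ r (c1 / r) (- (c2 / r))); [lra| | |intros t; apply sqrt_pos].
    + replace (c1 / r * (c1 / r) + - (c2 / r) * - (c2 / r)) with (S / (r * r)) by (unfold S; field; lra).
      apply (Rmult_lt_reg_r (r * r)); [nra|]. unfold Rdiv. rewrite Rmult_assoc, Rinv_l by nra. nra.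
    + intros t. rewrite cdist_circ_sq. unfold Qf. fold c1 c2. pose proof (sc1 t).
      assert (hr0 : r <> 0) by lra.
      assert (E1 : r * r * (1 + 2 * (c1 / r * cos t - - (c2 / r) * sin t) + (c1 / r * (c1 / r) + - (c2 / r) * - (c2 / r)))
        = r * r + 2 * r * (c1 * cos t + c2 * sin t) + (c1 * c1 + c2 * c2)) by (field; exact hr0).
      rewrite E1.
      transitivity (c1 * c1 + c2 * c2 + 2 * r * (c1 * cos t + c2 * sin t) + r * r * (sin t * sin t + cos t * cos t)); [ring|].
      rewrite H. ring.
Qed.

Lemma sqrt_le_of x y : 0 <= y -> x <= y * y -> sqrt x <= y.
Proof.
  intros hy h. rewrite <- (sqrt_square y) by exact hy. apply sqrt_le_1_alt. exact h.
Qed.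

Lemma sqrt_tri u1 u2 v1 v2 :
  sqrt ((u1 + v1) * (u1 + v1) + (u2 + v2) * (u2 + v2)) <= sqrt (u1 * u1 + u2 * u2) + sqrt (v1 * v1 + v2 * v2).
Proof.
  set (A := sqrt (u1 * u1 + u2 * u2)). set (B := sqrt (v1 * v1 + v2 * v2)).
  assert (hA : A * A = u1 * u1 + u2 * u2) by (apply sqrt_sqrt; nra).
  assert (hB : B * B = v1 * v1 + v2 * v2) by (apply sqrt_sqrt; nra).
  assert (hA0 : 0 <= A) by apply sqrt_pos. assert (hB0 : 0 <= B) by apply sqrt_pos.
  assert (hcs : u1 * v1 + u2 * v2 <= A * B).
  { assert ((u1 * v1 + u2 * v2) * (u1 * v1 + u2 * v2) <= (A * B) * (A * B)).
    { replace ((A * B) * (A * B)) with ((A * A) * (B * B)) by ring. rewrite hA, hB.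
      assert (0 <= (u1 * v2 - u2 * v1) * (u1 * v2 - u2 * v1)) by apply Rle_0_sqr. nra. }
    assert (0 <= A * B) by nra. nra. }
  apply sqrt_le_of; [lra|]. nra.
Qed.

Lemma cdist_eq z w : cdist z w = sqrt ((fst z - fst w) * (fst z - fst w) + (snd z - snd w) * (snd z - snd w)).
Proof. unfold cdist. f_equal. ring. Qed.

Lemma cdist_pos z w : 0 <= cdist z w.
Proof. unfold cdist. apply sqrt_pos. Qed.

Lemma cdist_tri z y x : cdist z x <= cdist z y + cdist y x.
Proof.
  rewrite !cdist_eq.
  replace (fst z - fst x) with ((fst z - fst y) + (fst y - fst x)) by ring.
  replace (snd z - snd x) with ((snd z - snd y) + (snd y - snd x)) by ring.
  apply sqrt_tri.
Qed.

Lemma cdist_sym z w : cdist z w = cdist w z.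
Proof. rewrite !cdist_eq. f_equal. ring. Qed.

Lemma cdist_refl z : cdist z z = 0.
Proof. rewrite cdist_eq. replace (_ + _) with 0 by ring. apply sqrt_0. Qed.

Lemma cdist_diff z w p : Rabs (cdist z p - cdist w p) <= cdist z w.
Proof.
  pose proof (cdist_tri z w p). pose proof (cdist_tri w z p). rewrite (cdist_sym w z) in H0.
  apply Rabs_le. lra.
Qed.

Lemma cdist_circ_r w r r' t : cdist (circ w r t) (circ w r' t) = Rabs (r - r').
Proof.
  rewrite cdist_eq. unfold circ; simpl.
  replace ((fst w + r * cos t - (fst w + r' * cos t)) * (fst w + r * cos t - (fst w + r' * cos t)) +
           (snd w + r * sin t - (snd w + r' * sin t)) * (snd w + r * sin t - (snd w + r' * sin t)))
    with ((r - r') * (r - r') * (sin t * sin t + cos t * cos t)) by ring.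
  rewrite sc1, Rmult_1_r. apply sqrt_Rsqr_abs.
Qed.

Lemma sqrt_sum_le x y : sqrt (x * x + y * y) <= Rabs x + Rabs y.
Proof.
  apply sqrt_le_of; [pose proof (Rabs_pos x); pose proof (Rabs_pos y); lra|].
  assert (Rabs x * Rabs x = x * x) by (rewrite <- Rabs_mult; apply Rabs_right; nra).
  assert (Rabs y * Rabs y = y * y) by (rewrite <- Rabs_mult; apply Rabs_right; nra).
  pose proof (Rabs_pos x); pose proof (Rabs_pos y). nra.
Qed.

Lemma cdist_circ_t w r t t0 : cdist (circ w r t) (circ w r t0) <= Rabs r * (Rabs (cos t - cos t0) + Rabs (sin t - sin t0)).
Proof.
  rewrite cdist_eq. unfold circ; simpl.
  replace (fst w + r * cos t - (fst w + r * cos t0)) with (r * (cos t - cos t0)) by ring.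
  replace (snd w + r * sin t - (snd w + r * sin t0)) with (r * (sin t - sin t0)) by ring.
  eapply Rle_trans; [apply sqrt_sum_le|]. rewrite !Rabs_mult. lra.
Qed.

Definition lip (F : R * R -> R) (K : R) : Prop :=
  0 <= K /\ forall z z', Rabs (F z - F z') <= K * cdist z z'.

Lemma lip_circ_cont F K w r t0 : lip F K -> continuity_pt (fun t => F (circ w r t)) t0.
Proof.
  intros [hK hF].
  set (g := fun t => K * (Rabs r * (Rabs (cos t - cos t0) + Rabs (sin t - sin t0)))).
  assert (gc : continuity_pt g t0).
  { unfold g. apply cont_mult; [apply cont_const|]. apply cont_mult; [apply cont_const|].
    apply cont_plus; apply cont_abs; apply cont_minus; try apply cont_const; [apply cont_cos|apply cont_sin]. }
  assert (g0 : g t0 = 0) by (unfold g; rewrite !Rminus_diag, Rabs_R0; ring).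
  intros eps he. destruct (gc eps he) as [d [hd hh]]. exists d. split; [exact hd|].
  intros t ht. specialize (hh t ht). simpl in *. unfold R_dist in *. rewrite g0, Rminus_0_r in hh.
  eapply Rle_lt_trans; [apply hF|]. eapply Rle_lt_trans; [|exact hh].
  eapply Rle_trans; [apply Rmult_le_compat_l; [exact hK|apply cdist_circ_t]|]. unfold g. apply RRle_abs.
Qed.

Lemma lip_plus F G K K' c : lip F K -> lip G K' -> lip (fun z => F z + c * G z) (K + Rabs c * K').
Proof.
  intros [h1 h2] [h3 h4]. split; [pose proof (Rabs_pos c); nra|].
  intros z z'. replace (F z + c * G z - (F z' + c * G z')) with ((F z - F z') + c * (G z - G z')) by ring.
  eapply Rle_trans; [apply Rabs_triang|]. rewrite Rabs_mult.
  pose proof (h2 z z'). pose proof (h4 z z'). pose proof (Rabs_pos c). pose proof (cdist_pos z z').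
  assert (Rabs c * Rabs (G z - G z') <= Rabs c * (K' * cdist z z')) by (apply Rmult_le_compat_l; lra). nra.
Qed.

Lemma lip_const c : lip (fun _ => c) 0.
Proof. split; [lra|]. intros. rewrite Rminus_diag, Rabs_R0. lra. Qed.

Lemma lnmax_lip X Y l : 0 < l -> Rabs (ln (Rmax X l) - ln (Rmax Y l)) <= Rabs (X - Y) / l.
Proof.
  intros hl.
  assert (key : forall P Q, l <= Q -> Q <= P -> ln P - ln Q <= (P - Q) / l).
  { intros P Q hQ hPQ. assert (0 < Q) by lra.
    assert (ln P - ln Q = ln (P / Q)) by (unfold Rdiv; rewrite ln_mult, ln_Rinv by (try apply Rinv_0_lt_compat; lra); ring).
    rewrite H0. assert (0 < P / Q) by (apply Rdiv_lt_0_compat; lra).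
    pose proof (exp_ineq1_le (ln (P / Q))). rewrite exp_ln in H2 by lra.
    assert (P / Q - 1 = (P - Q) / Q) by (field; lra).
    assert ((P - Q) / Q <= (P - Q) / l).
    { unfold Rdiv. apply Rmult_le_compat_l; [lra|]. apply Rinv_le_contravar; lra. }
    lra. }
  assert (hm : Rabs (Rmax X l - Rmax Y l) <= Rabs (X - Y)).
  { unfold Rmax. destruct (Rle_dec X l); destruct (Rle_dec Y l); apply Rabs_le; split;
      try (pose proof (RRle_abs (X - Y)); pose proof (Rabs_Ropp (X - Y)); pose proof (RRle_abs (- (X - Y))); lra);
      rewrite Rminus_diag; pose proof (Rabs_pos (X - Y)); lra. }
  pose proof (Rmax_r X l) as mx. pose proof (Rmax_r Y l) as my.
  assert (0 < / l) by (apply Rinv_0_lt_compat; lra).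
  destruct (Rle_or_lt (Rmax Y l) (Rmax X l)) as [H4|H4].
  - pose proof (key _ _ my H4). assert (0 <= ln (Rmax X l) - ln (Rmax Y l)).
    { destruct (Req_dec (Rmax Y l) (Rmax X l)) as [e|e]; [rewrite e; lra|]. left. apply Rlt_Rminus. apply ln_increasing; lra. }
    rewrite Rabs_right by lra. rewrite Rabs_right in hm by lra.
    apply Rle_trans with ((Rmax X l - Rmax Y l) / l); [lra|]. unfold Rdiv. apply Rmult_le_compat_r; lra.
  - pose proof (key _ _ mx (Rlt_le _ _ H4)). assert (ln (Rmax X l) - ln (Rmax Y l) < 0).
    { apply Rlt_minus. apply ln_increasing; lra. }
    rewrite Rabs_left by lra. rewrite Rabs_left in hm by lra.
    apply Rle_trans with ((Rmax Y l - Rmax X l) / l); [lra|]. unfold Rdiv. apply Rmult_le_compat_r; lra.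
Qed.

Lemma blk_lip a L : lip (blk a L) (/ exp L).
Proof.
  split; [left; apply Rinv_0_lt_compat; apply exp_pos|].
  intros z z'. unfold blk. eapply Rle_trans; [apply lnmax_lip; apply exp_pos|].
  unfold Rdiv. rewrite Rmult_comm. apply Rmult_le_compat_l; [left; apply Rinv_0_lt_compat; apply exp_pos|].
  apply cdist_diff.
Qed.

Lemma cdist_w_circ w r t : cdist w (circ w r t) = Rabs r.
Proof.
  rewrite cdist_eq. unfold circ; simpl.
  replace ((fst w - (fst w + r * cos t)) * (fst w - (fst w + r * cos t)) +
           (snd w - (snd w + r * sin t)) * (snd w - (snd w + r * sin t)))
    with ((r - 0) * (r - 0) * (sin t * sin t + cos t * cos t)) by ring.
  rewrite sc1, Rmult_1_r, Rminus_0_r. apply sqrt_Rsqr_abs.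
Qed.

Lemma blk_circ_ex a L w r : exists V, IntEq (fun t => blk a L (circ w r t)) 0 (2 * PI) V.
Proof.
  pose proof PI_pos. apply int_ex; [lra|]. intros t _. apply (lip_circ_cont _ _ _ _ _ (blk_lip a L)).
Qed.

Lemma ln_le_mono x y : 0 < x -> x <= y -> ln x <= ln y.
Proof. intros hx h. destruct (Req_dec x y) as [e|e]; [rewrite e; lra|left; apply ln_increasing; lra]. Qed.

Lemma blk_submean a L w r V : 0 <= r -> IntEq (fun t => blk a L (circ w r t)) 0 (2 * PI) V ->
  2 * PI * blk a L w <= V.
Proof.
  intros hr hV. pose proof PI_pos.
  set (l := exp L). assert (hl : 0 < l) by apply exp_pos.
  set (rho := cdist w (a, 0)).
  assert (hrho0 : 0 <= rho) by apply cdist_pos.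
  unfold blk at 1. fold l. fold rho.
  destruct (Rle_or_lt rho l) as [h|h].
  - rewrite Rmax_right by lra.
    pose proof (int_const (ln l) 0 (2 * PI)).
    assert (ln l * (2 * PI - 0) <= V).
    { eapply int_mono; [|exact H0|exact hV|]; [lra|]. intros t _. unfold blk. fold l.
      apply ln_le_mono; [lra|apply Rmax_r]. }
    lra.
  - rewrite Rmax_left by lra.
    assert (key : forall r' V', 0 <= r' -> r' <> rho -> IntEq (fun t => blk a L (circ w r' t)) 0 (2 * PI) V' ->
              2 * PI * ln rho <= V').
    { intros r' V' hr' hne hV'.
      pose proof (mean_ln_circ w a r' hr') as M. simpl in M.
      rewrite <- cdist_w in M. fold rho in M. specialize (M hne).
      assert (hD : forall t, Rabs (rho - r') <= cdist (circ w r' t) (a, 0)).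
      { intros t. pose proof (cdist_tri w (circ w r' t) (a, 0)) as T1. pose proof (cdist_tri w (a, 0) (circ w r' t)) as T2.
        rewrite cdist_w_circ in T1. rewrite cdist_w_circ, (cdist_sym (a, 0)) in T2. fold rho in T1, T2.
        rewrite Rabs_right in T1, T2 by lra. apply Rabs_le. lra. }
      assert (hpos : 0 < Rabs (rho - r')) by (apply Rabs_pos_lt; lra).
      assert (2 * PI * ln (Rmax r' rho) <= V').
      { eapply int_mono; [|exact M|exact hV'|]; [lra|]. intros t _. unfold blk.
        apply ln_le_mono; [pose proof (hD t); lra|apply Rmax_l]. }
      assert (ln rho <= ln (Rmax r' rho)) by (apply ln_le_mono; [lra|apply Rmax_r]). nra. }
    destruct (Req_dec r rho) as [e|e]; [|apply (key r); auto].
    destruct (Rle_or_lt (2 * PI * ln rho) V) as [hh|hh]; [exact hh|exfalso].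
    set (del := 2 * PI * ln rho - V).
    set (eta := Rmin rho (del * l / (16 * PI)) / 2).
    assert (heta : 0 < eta /\ eta <= rho / 2 /\ eta <= del * l / (32 * PI)).
    { unfold eta. pose proof (Rmin_l rho (del * l / (16 * PI))). pose proof (Rmin_r rho (del * l / (16 * PI))).
      assert (0 < del * l / (16 * PI)) by (apply Rdiv_lt_0_compat; [apply Rmult_lt_0_compat; unfold del; lra|lra]).
      assert (0 < Rmin rho (del * l / (16 * PI))) by (apply Rmin_glb_lt; lra).
      split; [lra|split; [lra|]]. replace (del * l / (32 * PI)) with (del * l / (16 * PI) / 2) by (field; lra). lra. }
    destruct heta as [he1 [he2 he3]].
    destruct (blk_circ_ex a L w (rho - eta)) as [V' hV'].
    pose proof (key (rho - eta) V' ltac:(lra) ltac:(lra) hV').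
    pose proof (int_lin _ _ _ _ 1 _ _ hV (int_const (eta / l) 0 (2 * PI))) as hsum.
    assert (V' <= V + 1 * (eta / l * (2 * PI - 0))).
    { eapply int_mono; [|exact hV'|exact hsum|]; [lra|]. intros t _.
      destruct (blk_lip a L) as [_ hb]. specialize (hb (circ w (rho - eta) t) (circ w r t)).
      rewrite cdist_circ_r in hb. rewrite e in hb. replace (rho - eta - rho) with (- eta) in hb by ring.
      rewrite Rabs_Ropp, (Rabs_right eta) in hb by lra. pose proof (Rle_abs (blk a L (circ w (rho - eta) t) - blk a L (circ w rho t))) as hb2. fold l in hb. rewrite e. 
      unfold Rdiv. replace (1 * (eta * / l)) with (/ l * eta) by ring. lra. }
    assert (eta / l * (2 * PI) <= del / 16).
    { apply (Rmult_le_reg_r l); [lra|]. unfold Rdiv. replace (eta * / l * (2 * PI) * l) with (eta * (2 * PI)) by (field; lra).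
      pose proof he3 as h3. apply (Rmult_le_compat_r (2 * PI)) in h3; [|lra].
      replace (del * l / (32 * PI) * (2 * PI)) with (del * / 16 * l) in h3 by (field; lra). exact h3. }
    unfold del in *. lra.
Qed.

Fixpoint fsum (f : nat -> R) (n : nat) : R :=
  match n with O => 0 | S n => fsum f n + f n end.

Lemma fsum_le f g n : (forall i, (i < n)%nat -> f i <= g i) -> fsum f n <= fsum g n.
Proof.
  induction n; cbn [fsum]; intros H; [lra|]. pose proof (H n ltac:(lia)). assert (fsum f n <= fsum g n) by (apply IHn; intros; apply H; lia). lra.
Qed.

Lemma fsum_one f n j : (forall i, (i < n)%nat -> f i <= 0) -> (j < n)%nat -> fsum f n <= f j.
Proof.
  induction n; intros H hj; [lia|]. cbn [fsum].
  assert (fsum f n <= 0).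
  { clear IHn hj. induction n; cbn [fsum]; [lra|]. pose proof (H n ltac:(lia)). assert (fsum f n <= 0) by (apply IHn; intros; apply H; lia). lra. }
  destruct (Nat.eq_dec j n) as [e|e].
  - subst. lra.
  - pose proof (IHn (fun i hi => H i ltac:(lia)) ltac:(lia)). pose proof (H n ltac:(lia)). lra.
Qed.

Lemma fsum_const_le f n c : (forall i, (i < n)%nat -> f i <= c) -> fsum f n <= INR n * c.
Proof.
  induction n; cbn [fsum]; intros H; [simpl; lra|]. rewrite S_INR. pose proof (H n ltac:(lia)).
  assert (fsum f n <= INR n * c) by (apply IHn; intros; apply H; lia). lra.
Qed.

Lemma fsum_nonneg f n : (forall i, (i < n)%nat -> 0 <= f i) -> 0 <= fsum f n.
Proof.
  induction n; cbn [fsum]; intros H; [lra|]. pose proof (H n ltac:(lia)).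
  assert (0 <= fsum f n) by (apply IHn; intros; apply H; lia). lra.
Qed.

Definition SM (F : R * R -> R) : Prop :=
  forall w r V, 0 <= r -> IntEq (fun t => F (circ w r t)) 0 (2 * PI) V -> 2 * PI * F w <= V.

Definition good (F : R * R -> R) : Prop := SM F /\ exists K, lip F K.

Lemma good_ex F w r : good F -> exists V, IntEq (fun t => F (circ w r t)) 0 (2 * PI) V.
Proof.
  intros [_ [K hK]]. pose proof PI_pos. apply int_ex; [lra|]. intros t _. apply (lip_circ_cont _ _ _ _ _ hK).
Qed.

Lemma good_lin F G c : 0 <= c -> good F -> good G -> good (fun z => F z + c * G z).
Proof.
  intros hc gF gG. split.
  - intros w r V hr hV.
    destruct (good_ex F w r gF) as [V1 h1]. destruct (good_ex G w r gG) as [V2 h2].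
    pose proof (int_lin _ _ _ _ c _ _ h1 h2). rewrite (int_unique _ _ _ _ _ hV H).
    pose proof ((proj1 gF) w r V1 hr h1). pose proof ((proj1 gG) w r V2 hr h2). nra.
  - destruct gF as [_ [K1 h1]]. destruct gG as [_ [K2 h2]]. eexists. apply lip_plus; eauto.
Qed.

Lemma good_const k : good (fun _ => k).
Proof.
  split; [|exists 0; apply lip_const].
  intros w r V hr hV. pose proof (int_const k 0 (2 * PI)). rewrite (int_unique _ _ _ _ _ hV H). lra.
Qed.

Lemma good_ext F G : (forall z, F z = G z) -> good F -> good G.
Proof.
  intros e [h1 [K h2]]. split.
  - intros w r V hr hV. rewrite <- e. apply (h1 w r V hr).
    pose proof PI_pos. apply (int_ext (fun t => G (circ w r t))); [lra| |exact hV]. intros; auto.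
  - exists K. destruct h2 as [hK h2]. split; auto. intros; rewrite <- !e; auto.
Qed.

Lemma good_scale F c : 0 <= c -> good F -> good (fun z => c * F z).
Proof.
  intros hc gF. apply (good_ext (fun z => 0 + c * F z)); [intros; ring|].
  apply good_lin; auto. apply good_const.
Qed.

Lemma good_fsum (f : nat -> R * R -> R) n : (forall i, good (f i)) -> good (fun z => fsum (fun i => f i z) n).
Proof.
  intros H. induction n; simpl.
  - apply good_const.
  - apply (good_ext (fun z => fsum (fun i => f i z) n + 1 * f n z)); [intros; ring|].
    apply good_lin; auto; lra.
Qed.

Lemma good_blk a L : good (blk a L).
Proof.
  split; [|exists (/ exp L); apply blk_lip].
  intros w r V hr hV. apply (blk_submean a L w r V hr hV).
Qed.

Definition T (N : nat) : R := / sqrt (INR (S N)).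
Definition cc (i : nat) : R := (T i - T (S i)) / INR (S i).
Definition Row (n : nat) (L : R) (z : R * R) : R := fsum (fun j => blk (INR (S j) / INR n) L z) n.
Definition Bf (z : R * R) : R := blk (1 / 2) 0 z + 1.
Definition phi (N : nat) (z : R * R) : R :=
  fsum (fun i => cc i * Row (S i) (- INR N) z) N + T N * Bf z.

Lemma T_pos N : 0 < T N.
Proof. unfold T. apply Rinv_0_lt_compat. apply sqrt_lt_R0. apply lt_0_INR. lia. Qed.

Lemma T_dec N : T (S N) <= T N.
Proof.
  unfold T. apply Rinv_le_contravar; [apply sqrt_lt_R0; apply lt_0_INR; lia|].
  apply sqrt_le_1_alt. apply le_INR. lia.
Qed.

Lemma cc_nonneg i : 0 <= cc i.
Proof.
  unfold cc. pose proof (T_dec i). apply Rmult_le_pos; [lra|]. left; apply Rinv_0_lt_compat, lt_0_INR; lia.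
Qed.

Lemma cc_eq N : INR (S N) * cc N = T N - T (S N).
Proof. unfold cc. field. apply not_0_INR. lia. Qed.

Lemma good_Row n L : good (Row n L).
Proof. unfold Row. apply (good_fsum (fun j => blk (INR (S j) / INR n) L)). intros; apply good_blk. Qed.

Lemma good_Bf : good Bf.
Proof.
  unfold Bf. apply (good_ext (fun z => 1 + 1 * blk (1/2) 0 z)); [intros; ring|].
  apply good_lin; [lra|apply good_const|apply good_blk].
Qed.

Lemma good_phi N : good (phi N).
Proof.
  unfold phi. apply (good_ext (fun z => fsum (fun i => cc i * Row (S i) (- INR N) z) N + T N * Bf z)); [intros; ring|].
  apply good_lin; [left; apply T_pos| |apply good_Bf].
  apply (good_fsum (fun i z => cc i * Row (S i) (- INR N) z)). intros i. apply good_scale; [apply cc_nonneg|apply good_Row].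
Qed.

Lemma blk_mono_L a L L' z : L <= L' -> blk a L z <= blk a L' z.
Proof.
  intros h. unfold blk. apply ln_le_mono.
  - apply Rlt_le_trans with (exp L); [apply exp_pos|apply Rmax_r].
  - assert (exp L <= exp L') by (destruct (Req_dec L L') as [e|e]; [subst; lra|left; apply exp_increasing; lra]).
    apply Rmax_lub; [apply Rmax_l|]. eapply Rle_trans; [exact H|apply Rmax_r].
Qed.

Lemma blk_le_Bf a L z : 0 <= a <= 1 -> L <= 0 -> blk a L z <= Bf z.
Proof.
  intros ha hL. unfold Bf, blk. rewrite exp_0.
  set (M := Rmax (cdist z (1 / 2, 0)) 1).
  assert (hM : 1 <= M) by apply Rmax_r.
  assert (hd : cdist z (a, 0) <= cdist z (1/2, 0) + 1/2).
  { pose proof (cdist_tri z (1/2, 0) (a, 0)).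
    assert (cdist (1/2, 0) (a, 0) = Rabs (1/2 - a)).
    { rewrite cdist_eq. simpl. replace ((1/2 - a) * (1/2 - a) + (0 - 0) * (0 - 0)) with ((1/2 - a) * (1/2 - a)) by ring. apply sqrt_Rsqr_abs. }
    rewrite H0 in H. assert (Rabs (1/2 - a) <= 1/2) by (apply Rabs_le; lra). lra. }
  assert (he : exp L <= 1) by (rewrite <- exp_0; destruct (Req_dec L 0); [subst; lra|left; apply exp_increasing; lra]).
  assert (Rmax (cdist z (a, 0)) (exp L) <= 3 / 2 * M).
  { apply Rmax_lub; [|lra]. pose proof (Rmax_l (cdist z (1 / 2, 0)) 1). fold M in H. lra. }
  assert (hpos : 0 < Rmax (cdist z (a, 0)) (exp L)) by (apply Rlt_le_trans with (exp L); [apply exp_pos|apply Rmax_r]).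
  pose proof (exp_ineq1 1 ltac:(lra)).
  assert (ln (Rmax (cdist z (a, 0)) (exp L)) <= ln (exp 1 * M)) by (apply ln_le_mono; [lra|nra]).
  rewrite ln_mult, ln_exp in H1 by (try apply exp_pos; lra). lra.
Qed.

Lemma Row_le n L z : (1 <= n)%nat -> L <= 0 -> Row n L z <= INR n * Bf z.
Proof.
  intros hn hL. unfold Row. apply fsum_const_le. intros i hi. apply blk_le_Bf; auto.
  assert (0 < INR n) by (apply lt_0_INR; lia).
  split; [apply Rmult_le_pos; [apply pos_INR|left; apply Rinv_0_lt_compat; lra]|].
  apply (Rmult_le_reg_r (INR n)); [lra|]. unfold Rdiv. rewrite Rmult_assoc, Rinv_l, Rmult_1_r, Rmult_1_l by lra.
  apply le_INR. lia.
Qed.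

Lemma Row_mono n L L' z : L <= L' -> Row n L z <= Row n L' z.
Proof. intros h. unfold Row. apply fsum_le. intros; apply blk_mono_L; auto. Qed.

Lemma phi_dec N z : phi (S N) z <= phi N z.
Proof.
  unfold phi. cbn [fsum].
  assert (fsum (fun i => cc i * Row (S i) (- INR (S N)) z) N <= fsum (fun i => cc i * Row (S i) (- INR N) z) N).
  { apply fsum_le. intros i _. apply Rmult_le_compat_l; [apply cc_nonneg|]. apply Row_mono. rewrite S_INR. lra. }
  assert (cc N * Row (S N) (- INR (S N)) z <= cc N * (INR (S N) * Bf z)).
  { apply Rmult_le_compat_l; [apply cc_nonneg|]. apply Row_le; [lia|]. pose proof (pos_INR (S N)). lra. }
  assert (cc N * (INR (S N) * Bf z) = (T N - T (S N)) * Bf z) by (rewrite <- cc_eq; ring).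
  lra.
Qed.

Lemma phi_mono N M z : (N <= M)%nat -> phi M z <= phi N z.
Proof. intros h. induction h; [lra|]. pose proof (phi_dec m z). lra. Qed.

Lemma dini (h : nat -> R -> R) a b : a <= b ->
  (forall N t, continuity_pt (h N) t) ->
  (forall N M t, (N <= M)%nat -> h M t <= h N t) ->
  (forall t, a <= t <= b -> exists N, h N t < 0) ->
  exists N, forall t, a <= t <= b -> h N t < 0.
Proof.
  intros hab hc hm hp.
  set (E := fun s => a <= s <= b /\ exists N, forall t, a <= t <= s -> h N t < 0).
  assert (Ea : E a).
  { split; [lra|]. destruct (hp a ltac:(lra)) as [N hN]. exists N. intros t ht. replace t with a by lra. exact hN. }
  assert (Eb : bound E) by (exists b; intros s [hs _]; lra).
  destruct (completeness E Eb (ex_intro _ a Ea)) as [sig [hub hlub]].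
  assert (hs1 : a <= sig) by (apply hub; exact Ea).
  assert (hs2 : sig <= b) by (apply hlub; intros s [hs _]; lra).
  destruct (hp sig ltac:(lra)) as [N0 hN0].
  destruct (hc N0 sig (- h N0 sig) ltac:(lra)) as [d [hd hdd]].
  assert (hnear : forall t, Rabs (t - sig) < d -> h N0 t < 0).
  { intros t ht. destruct (Req_dec t sig) as [e|e]; [subst; exact hN0|].
    assert (hh := hdd t (conj (conj I (fun e2 => e (eq_sym e2))) ht)). simpl in hh. unfold R_dist in hh.
    apply Rabs_def2 in hh. lra. }
  destruct (classic (exists s, E s /\ sig - d < s)) as [[s [[hs1' [N1 hN1]] hs2']]|hno].
  - set (N := Nat.max N0 N1).
    set (m := Rmin b (sig + d / 2)).
    assert (hEm : E m).
    { split; [split; [unfold m; apply Rmin_glb; lra|apply Rmin_l]|].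
      exists N. intros t ht.
      destruct (Rle_or_lt t s) as [h1|h1].
      - eapply Rle_lt_trans; [apply hm; apply Nat.le_max_r|]. apply hN1; lra.
      - eapply Rle_lt_trans; [apply hm; apply Nat.le_max_l|]. apply hnear.
        pose proof (Rmin_r b (sig + d / 2)). apply Rabs_def1; unfold m in ht; lra. }
    assert (m <= sig) by (apply hub; exact hEm).
    assert (hmb : m = b).
    { unfold m in *. unfold Rmin in *. destruct (Rle_dec b (sig + d / 2)); [reflexivity|lra]. }
    rewrite hmb in hEm. destruct hEm as [_ [N' hN']]. exists N'. exact hN'.
  - exfalso. assert (sig <= sig - d).
    { apply hlub. intros s hs. destruct (Rle_or_lt s (sig - d)) as [h1|h1]; [exact h1|]. exfalso. apply hno. eauto. }
    lra.
Qed.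

Definition spec (z : R * R) (v : R) : Prop :=
  (forall N, v <= phi N z) /\ (forall eps, 0 < eps -> exists N, phi N z < v + eps).

Lemma spec_or z : (exists v, spec z v) \/ (forall K, exists N, phi N z < K).
Proof.
  destruct (classic (exists K, forall N, K <= phi N z)) as [[K hK]|hno].
  - left. set (E := fun y => exists N, y = - phi N z).
    assert (hb : bound E) by (exists (- K); intros y [N e]; subst; specialize (hK N); lra).
    destruct (completeness E hb (ex_intro _ (- phi 0%nat z) (ex_intro _ 0%nat eq_refl))) as [m [hub hlub]].
    exists (- m). split.
    + intros N. assert (E (- phi N z)) by (exists N; reflexivity). specialize (hub _ H). lra.
    + intros eps he. destruct (classic (exists N, phi N z < - m + eps)) as [h|h]; [exact h|exfalso].
      assert (m <= m - eps); [|lra].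
      apply hlub. intros y [N e]. subst. destruct (Rle_or_lt (- m + eps) (phi N z)) as [h1|h1]; [lra|].
      exfalso; apply h; eauto.
  - right. intros K. destruct (classic (exists N, phi N z < K)) as [h|h]; [exact h|exfalso].
    apply hno. exists K. intros N. destruct (Rle_or_lt K (phi N z)) as [h1|h1]; [exact h1|]. exfalso; apply h; eauto.
Qed.

Definition u (z : R * R) : option R :=
  match excluded_middle_informative (exists v, spec z v) with
  | left h => Some (proj1_sig (constructive_indefinite_description _ h))
  | right _ => None
  end.

Lemma u_cases z : (exists v, u z = Some v /\ spec z v) \/ (u z = None /\ forall K, exists N, phi N z < K).
Proof.
  unfold u. destruct (excluded_middle_informative _) as [h|h].
  - left. exists (proj1_sig (constructive_indefinite_description _ h)). split; [reflexivity|].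
    exact (proj2_sig (constructive_indefinite_description _ h)).
  - right. split; [reflexivity|]. destruct (spec_or z) as [h'|h']; [contradiction|exact h'].
Qed.

Lemma u_below z c : ext_lt (u z) c -> exists N, phi N z < c.
Proof.
  intros h. destruct (u_cases z) as [[v [e [s1 s2]]]|[e hK]]; rewrite e in h; simpl in h.
  - destruct (s2 (c - v) ltac:(lra)) as [N hN]. exists N. lra.
  - apply hK.
Qed.

Lemma u_le z N : ext_le (u z) (phi N z).
Proof.
  destruct (u_cases z) as [[v [e [s1 s2]]]|[e hK]]; rewrite e; simpl; auto.
Qed.

Lemma u_usc : usc u.
Proof.
  intros z c h. destruct (u_below z c h) as [N hN].
  destruct (good_phi N) as [_ [K [hK hL]]].
  set (eps := (c - phi N z) / (K + 1)).
  assert (heps : 0 < eps) by (apply Rdiv_lt_0_compat; lra).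
  exists eps. split; [exact heps|]. intros w hw.
  assert (phi N w < c).
  { pose proof (hL w z). rewrite cdist_sym in H. pose proof (Rle_abs (phi N w - phi N z)).
    assert (K * cdist z w <= K * eps) by (apply Rmult_le_compat_l; lra).
    assert (K * eps < c - phi N z).
    { unfold eps. apply (Rmult_lt_reg_r (K + 1)); [lra|]. unfold Rdiv.
      replace (K * ((c - phi N z) * / (K + 1)) * (K + 1)) with (K * (c - phi N z)) by (field; lra). nra. }
    lra. }
  pose proof (u_le w N). destruct (u w); simpl in *; auto. lra.
Qed.

Lemma u_submean : submean u.
Proof.
  intros w. exists 1. split; [lra|]. intros r hr g pr gc hg.
  pose proof PI_pos.
  destruct (u_cases w) as [[v [e [s1 s2]]]|[e _]]; rewrite e; simpl; [|exact I].
  destruct (Rle_or_lt v (RiemannInt pr / (2 * PI))) as [hh|hh]; [exact hh|exfalso].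
  set (Ig := RiemannInt pr) in *.
  set (eps := v - Ig / (2 * PI)).
  assert (heps : 0 < eps) by (unfold eps; lra).
  set (h := fun N t => phi N (circ w r t) - g t - eps / 2).
  destruct (dini h 0 (2 * PI) ltac:(lra)) as [N hN].
  - intros N t. unfold h. apply cont_minus; [apply cont_minus; [|apply gc]|apply cont_const].
    destruct (good_phi N) as [_ [K hK]]. apply (lip_circ_cont _ _ _ _ _ hK).
  - intros N M t hNM. unfold h. pose proof (phi_mono N M (circ w r t) hNM). lra.
  - intros t ht. pose proof (hg t ht) as hgt. change (ext_le (u (circ w r t)) (g t)) in hgt. unfold h.
    destruct (u_cases (circ w r t)) as [[v' [e' [s1' s2']]]|[e' hK']]; rewrite e' in hgt; simpl in hgt.
    + destruct (s2' (eps / 2) ltac:(lra)) as [N hN]. exists N. lra.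
    + destruct (hK' (g t + eps / 2)) as [N hN]. exists N. lra.
  - destruct (good_ex (phi N) w r (good_phi N)) as [V hV].
    pose proof ((proj1 (good_phi N)) w r V ltac:(lra) hV) as hsm.
    pose proof (s1 N).
    assert (hgI : IntEq g 0 (2 * PI) Ig) by (exists pr; reflexivity).
    pose proof (int_lin _ _ _ _ 1 _ _ hgI (int_const (eps / 2) 0 (2 * PI))) as hsum.
    assert (V <= Ig + 1 * (eps / 2 * (2 * PI - 0))).
    { eapply int_mono; [|exact hV|exact hsum|]; [lra|]. intros t ht. pose proof (hN t ltac:(lra)). unfold h in H1. lra. }
    assert (Ig = 2 * PI * (v - eps)) by (unfold eps; field; lra).
    assert (2 * PI * v <= V) by nra.
    nra.
Qed.

Lemma phi_nonneg_far N : 0 <= phi N (0, 2).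
Proof.
  assert (hb : forall a L, 0 <= blk a L (0, 2)).
  { intros a L. unfold blk. apply Rle_trans with (ln 1); [rewrite ln_1; lra|]. apply ln_le_mono; [lra|].
    eapply Rle_trans; [|apply Rmax_l]. rewrite cdist_eq. simpl.
    apply (Rle_trans _ (sqrt 1)); [rewrite sqrt_1; lra|]. apply sqrt_le_1_alt. assert (0 <= (0 - a) * (0 - a)) by apply Rle_0_sqr. lra. }
  unfold phi. apply Rplus_le_le_0_compat.
  - apply fsum_nonneg. intros i _. apply Rmult_le_pos; [apply cc_nonneg|]. unfold Row. apply fsum_nonneg. intros; apply hb.
  - apply Rmult_le_pos; [left; apply T_pos|]. unfold Bf. pose proof (hb (1/2) 0). lra.
Qed.

Lemma u_finite : exists z, u z <> None.
Proof.
  exists (0, 2). destruct (u_cases (0, 2)) as [[v [e _]]|[e hK]].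
  - rewrite e. discriminate.
  - exfalso. destruct (hK 0) as [N hN]. pose proof (phi_nonneg_far N). lra.
Qed.

Lemma cc_lower i : sqrt (INR (S i)) / 6 <= cc i * INR (S i) ^ 3.
Proof.
  set (n := INR (S i)). assert (hn : 1 <= n) by (unfold n; apply (le_INR 1); lia).
  set (p := sqrt n). set (q := sqrt (n + 1)).
  assert (hp2 : p * p = n) by (apply sqrt_sqrt; lra).
  assert (hq2 : q * q = n + 1) by (apply sqrt_sqrt; lra).
  assert (hp : 1 <= p) by (unfold p; rewrite <- sqrt_1; apply sqrt_le_1_alt; lra).
  assert (hq : 0 < q) by (unfold q; apply sqrt_lt_R0; lra).
  assert (hpq : p <= q) by (unfold p, q; apply sqrt_le_1_alt; lra).
  assert (hq2p : q <= 2 * p).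
  { destruct (Rle_or_lt q (2 * p)) as [h|h]; [exact h|exfalso].
    assert (2 * p * (2 * p) < q * q) by (apply Rmult_le_0_lt_compat; lra). lra. }
  assert (eT : T i = / p) by reflexivity.
  assert (eT' : T (S i) = / q) by (unfold T; rewrite S_INR; reflexivity).
  unfold cc. rewrite eT, eT'. fold n.
  assert (hqp : q - p = / (q + p)).
  { apply (Rmult_eq_reg_r (q + p)); [|lra]. rewrite Rinv_l by lra.
    replace ((q - p) * (q + p)) with (q * q - p * p) by ring. lra. }
  replace ((/ p - / q) / n * n ^ 3) with ((q - p) * p * p * p / q) by (rewrite <- hp2; field; lra).
  rewrite hqp.
  replace (/ (q + p) * p * p * p / q) with (p * p * p / (q * (q + p))) by (field; lra).
  unfold Rdiv. apply (Rmult_le_reg_r (6 * (q * (q + p)))); [nra|].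
  replace (p * / 6 * (6 * (q * (q + p)))) with (p * (q * (q + p))) by (field).
  replace (p * p * p * / (q * (q + p)) * (6 * (q * (q + p)))) with (6 * p * p * p) by (field; nra).
  nra.
Qed.

Lemma blk_real x a L : blk a L (x, 0) = ln (Rmax (Rabs (x - a)) (exp L)).
Proof.
  unfold blk. f_equal. f_equal. rewrite cdist_eq. simpl.
  replace ((x - a) * (x - a) + (0 - 0) * (0 - 0)) with ((x - a) * (x - a)) by ring. apply sqrt_Rsqr_abs.
Qed.

Lemma phi_G x : 0 < x < 1 -> (forall k, (1 <= k)%nat -> exists n, (k <= n)%nat /\ Aprime n x) ->
  forall K, exists N, phi N (x, 0) < K.
Proof.
  intros hx hG K.
  set (B := (6 * (Rabs K + 2)) * (6 * (Rabs K + 2))).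
  destruct (INR_unbounded B) as [k0 hk0].
  destruct (hG (S k0) ltac:(lia)) as [n [hn [m [hm [_ hxm]]]]].
  set (N := (n ^ 3)%nat).
  assert (hnB : B < INR n) by (apply Rlt_le_trans with (INR k0); [lra|apply le_INR; lia]).
  assert (hn1 : (1 <= n)%nat) by lia.
  assert (hNn : INR N = INR n ^ 3) by (unfold N; apply pow_INR).
  assert (hNge : (n <= N)%nat) by (unfold N; simpl; nia).
  assert (hterm : forall a, 0 < a <= 1 -> blk a (- INR N) (x, 0) <= 0).
  { intros a ha. rewrite blk_real. apply Rle_trans with (ln 1); [|rewrite ln_1; lra].
    apply ln_le_mono; [apply Rlt_le_trans with (exp (- INR N)); [apply exp_pos|apply Rmax_r]|].
    apply Rmax_lub; [apply Rabs_le; lra|]. rewrite <- exp_0.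
    destruct (Req_dec (- INR N) 0) as [e|e]; [rewrite e; lra|]. left; apply exp_increasing. pose proof (pos_INR N). lra. }
  assert (hpt : forall i j, (j < S i)%nat -> 0 < INR (S j) / INR (S i) <= 1).
  { intros i j hj. assert (0 < INR (S i)) by (apply lt_0_INR; lia). split.
    - apply Rdiv_lt_0_compat; [apply lt_0_INR; lia|lra].
    - apply (Rmult_le_reg_r (INR (S i))); [lra|]. unfold Rdiv. rewrite Rmult_assoc, Rinv_l, Rmult_1_r by lra.
      rewrite Rmult_1_l. apply le_INR. lia. }
  assert (hRow : forall i L, L = - INR N -> Row (S i) L (x, 0) <= 0).
  { intros i L e. subst. unfold Row. apply (Rle_trans _ (INR (S i) * 0)); [|lra]. apply fsum_const_le. intros j hj. apply hterm. apply hpt. exact hj. }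
  assert (hgood : blk (INR m / INR n) (- INR N) (x, 0) <= - INR n ^ 3).
  { rewrite blk_real. rewrite <- (ln_exp (- INR n ^ 3)). apply ln_le_mono; [apply Rlt_le_trans with (exp (- INR N)); [apply exp_pos|apply Rmax_r]|].
    apply Rmax_lub.
    - unfold rprime in hxm. lra.
    - rewrite hNn. lra. }
  assert (hRowg : Row n (- INR N) (x, 0) <= - INR n ^ 3).
  { unfold Row. eapply Rle_trans; [apply (fsum_one _ n (pred m))|].
    - intros j hj. apply hterm. destruct n; [lia|]. apply hpt. exact hj.
    - lia.
    - replace (S (pred m)) with m by lia. exact hgood. }
  assert (en : S (pred n) = n) by lia.
  assert (hphi : phi N (x, 0) <= cc (pred n) * Row (S (pred n)) (- INR N) (x, 0) + T N * Bf (x, 0)).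
  { unfold phi. apply Rplus_le_compat_r.
    apply (fsum_one (fun i => cc i * Row (S i) (- INR N) (x, 0)) N (pred n)).
    - intros i hi. pose proof (cc_nonneg i). pose proof (hRow i _ eq_refl). nra.
    - lia. }
  rewrite en in hphi.
  assert (hBf : Bf (x, 0) = 1).
  { unfold Bf. rewrite blk_real, exp_0, Rmax_right; [rewrite ln_1; ring|]. apply Rabs_le; lra. }
  assert (hT : T N <= 1).
  { unfold T. rewrite <- Rinv_1. apply Rinv_le_contravar; [lra|]. rewrite <- sqrt_1. apply sqrt_le_1_alt.
    apply (le_INR 1); lia. }
  pose proof (cc_lower (pred n)) as hcl. rewrite en in hcl.
  pose proof (cc_nonneg (pred n)).
  assert (cc (pred n) * Row n (- INR N) (x, 0) <= - (cc (pred n) * INR n ^ 3)).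
  { replace (- (cc (pred n) * INR n ^ 3)) with (cc (pred n) * (- INR n ^ 3)) by ring. apply Rmult_le_compat_l; auto. }
  assert (hsq : 6 * (Rabs K + 2) <= sqrt (INR n)).
  { rewrite <- (sqrt_square (6 * (Rabs K + 2))) by (pose proof (Rabs_pos K); lra). apply sqrt_le_1_alt. unfold B in hnB. lra. }
  pose proof (Rle_abs K). pose proof (T_pos N).
  rewrite hBf in hphi. exists N. rewrite Rmult_1_r in hphi.
  assert (Rabs K + 2 <= sqrt (INR n) / 6) by (apply (Rmult_le_reg_r 6); [lra|]; unfold Rdiv; rewrite Rmult_assoc, Rinv_l, Rmult_1_r by lra; lra).
  pose proof (Rle_abs (- K)). rewrite Rabs_Ropp in H4. lra.
Qed.

Lemma polar_G (hunit : forall x, Gset x -> 0 < x < 1) : polar Gset.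
Proof.
  exists u. split; [split; [apply u_usc|apply u_submean]|split; [apply u_finite|]].
  intros x hG.
  destruct (u_cases (x, 0)) as [[v [e [s1 s2]]]|[e _]]; [|exact e].
  exfalso. destruct (phi_G x (hunit x hG) hG v) as [N hN]. specialize (s1 N). lra.
Qed.


Theorem mainTheorem9 :
  dense_in_unit Gset /\ G_delta Gset /\ (forall x, Gset x -> Sset x) /\
  log_measure_zero Gset /\ polar Gset.
Proof.
  split; [exact dense_G|].
  split; [exact Gset_Gdelta|].
  split; [exact G_in_S|].
  split; [exact log_measure_zero_G|].
  apply polar_G. exact G_unit.
Qed.
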